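(* Suppose that $\psi$ is an orthonormal differentiable wavelet such that $\psi$ and $\psi'$ have a common radial decreasing $L^1$-majorant $W$ satisfying $\int_0^\infty sW(s)\,ds<\infty$. Then the family $\{K_\varepsilon\}_{\varepsilon\in\mathcal{E}}$, $K_\varepsilon(x,y)=\sum_{j,k\in\mathbb{Z}}\varepsilon_{j,k}\psi_{j,k}(x)\overline{\psi_{j,k}(y)}$, is a uniform in $\mathcal{E}$ family of standard kernels, with constants $C_1,C_2,C_3$ depending only on $W$.
   Context: A function $\psi\in L^2(\mathbb{R})$ is an orthonormal wavelet if $\psi_{j,k}(x)=2^{j/2}\psi(2^jx-k)$, $j,k\in\mathbb{Z}$, form an orthonormal basis of $L^2(\mathbb{R})$. A function $W:[0,\infty)\to(0,\infty)$ is a radial decreasing $L^1$-majorant of $g$ if $|g(x)|\le W(|x|)$ a.e., $W\in L^1([0,\infty))$, $W$ is decreasing and $W(0)<\infty$. $\mathcal{E}$ is the set of all sequences $\varepsilon=\{\varepsilon_{j,k}\}_{j,k\in\mathbb{Z}}$ with $\varepsilon_{j,k}\in\{-1,1\}$. A family $\{K_\omega\}_{\omega\in\Omega}$ of functions on $\mathbb{R}^2\setminus\{(x,x)\}$ is a uniform in $\Omega$ family of standard kernels if there exist $C_1,C_2,C_3\in(0,\infty)$ such that for all $\omega$ and all off-diagonal pairs: $|K_\omega(x,y)|\le C_1/|x-y|$; $|K_\omega(z,y)-K_\omega(x,y)|\le C_2|z-x|/|x-y|^2$ if $|z-x|\le\frac12|x-y|$; $|K_\omega(x,w)-K_\omega(x,y)|\le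 C_3|w-y|/|x-y|^2$ if $|w-y|\le\frac12|x-y|$. *)

(* Defs.v *)
From Stdlib Require Import Reals Lra ZArith List Classical ClassicalEpsilon.
Open Scope R_scope.

Definition Cx : Type := (R * R)%type.
Definition Cre (z : Cx) : R := fst z.
Definition Cim (z : Cx) : R := snd z.
Definition C0 : Cx := (0, 0).
Definition C1 : Cx := (1, 0).
Definition Cadd (z w : Cx) : Cx := (Cre z + Cre w, Cim z + Cim w).
Definition Csub (z w : Cx) : Cx := (Cre z - Cre w, Cim z - Cim w).
Definition Cmul (z w : Cx) : Cx :=
  (Cre z * Cre w - Cim z * Cim w, Cre z * Cim w + Cim z * Cre w).
Definition Cconj (z : Cx) : Cx := (Cre z, - Cim z).
Definition Cscale (r : R) (z : Cx) : Cx := (r * Cre z, r * Cim z).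
Definition Cnorm (z : Cx) : R := sqrt (Cre z ^ 2 + Cim z ^ 2).

Definition psi_jk (psi : R -> Cx) (j k : Z) (x : R) : Cx :=
  Cscale (sqrt (powerRZ 2 j)) (psi (powerRZ 2 j * x - IZR k)).

Definition RInt_eq (f : R -> R) (a b v : R) : Prop :=
  exists pr : Riemann_integrable f a b, RiemannInt pr = v.

Definition ImpInt_R (f : R -> R) (v : R) : Prop :=
  (forall a b, exists w, RInt_eq f a b w) /\
  (forall eps, 0 < eps -> exists M, forall a b w,
      a <= - M -> M <= b -> RInt_eq f a b w -> Rabs (w - v) < eps).

Definition ImpInt0 (f : R -> R) (v : R) : Prop :=
  (forall b, 0 <= b -> exists w, RInt_eq f 0 b w) /\
  (forall eps, 0 < eps -> exists M, forall b w,
      M <= b -> RInt_eq f 0 b w -> Rabs (w - v) < eps).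

Definition CImpInt (f : R -> Cx) (v : Cx) : Prop :=
  ImpInt_R (fun x => Cre (f x)) (Cre v) /\ ImpInt_R (fun x => Cim (f x)) (Cim v).

Definition inner_eq (f g : R -> Cx) (v : Cx) : Prop :=
  CImpInt (fun x => Cmul (f x) (Cconj (g x))) v.

Fixpoint Csum_list (a : Z * Z -> Cx) (F : list (Z * Z)) : Cx :=
  match F with nil => C0 | cons i F' => Cadd (a i) (Csum_list a F') end.
Fixpoint Rsum_list (a : Z * Z -> R) (F : list (Z * Z)) : R :=
  match F with nil => 0 | cons i F' => a i + Rsum_list a F' end.

Definition HasSumC (a : Z * Z -> Cx) (s : Cx) : Prop :=
  forall eps, 0 < eps -> exists F0 : list (Z * Z), forall F : list (Z * Z),
    NoDup F -> incl F0 F -> Cnorm (Csub (Csum_list a F) s) < eps.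
Definition HasSumR (a : Z * Z -> R) (s : R) : Prop :=
  forall eps, 0 < eps -> exists F0 : list (Z * Z), forall F : list (Z * Z),
    NoDup F -> incl F0 F -> Rabs (Rsum_list a F - s) < eps.

Definition Null (N : R -> Prop) : Prop :=
  forall eps, 0 < eps -> exists a b : nat -> R,
    (forall n, a n <= b n) /\
    (forall x, N x -> exists n, a n < x < b n) /\
    (forall n, sum_f_R0 (fun i => b i - a i) n <= eps).
Definition ae (P : R -> Prop) : Prop :=
  exists N, Null N /\ forall x, ~ N x -> P x.

Definition Ccontinuous (f : R -> Cx) : Prop :=
  continuity (fun x => Cre (f x)) /\ continuity (fun x => Cim (f x)).

(* psi_{j,k} orthonormal in L^2(R), and complete: Parseval identity holds for
   every continuous compactly supported f (a dense subspace of L^2(R)). *)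
Definition orthonormal_wavelet (psi : R -> Cx) : Prop :=
  (forall j k j' k', inner_eq (psi_jk psi j k) (psi_jk psi j' k')
       (if (Z.eqb j j' && Z.eqb k k')%bool then C1 else C0)) /\
  (forall f : R -> Cx, Ccontinuous f ->
     (exists R0, forall x, R0 < Rabs x -> f x = C0) ->
     forall c : Z -> Z -> Cx,
       (forall j k, inner_eq f (psi_jk psi j k) (c j k)) ->
       forall nf, ImpInt_R (fun x => Cnorm (f x) ^ 2) nf ->
       HasSumR (fun jk => Cnorm (c (fst jk) (snd jk)) ^ 2) nf).

Definition radial_decr_L1_majorant (W : R -> R) (g : R -> Cx) : Prop :=
  (forall s, 0 <= s -> 0 < W s) /\
  (forall s t, 0 <= s -> s <= t -> W t <= W s) /\
  (exists v, ImpInt0 W v) /\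
  ae (fun x => Cnorm (g x) <= W (Rabs x)).

Definition sign_seq (eps : Z -> Z -> R) : Prop :=
  forall j k, eps j k = 1 \/ eps j k = -1.

Definition kernel_term (psi : R -> Cx) (eps : Z -> Z -> R) (x y : R)
  (jk : Z * Z) : Cx :=
  Cscale (eps (fst jk) (snd jk))
    (Cmul (psi_jk psi (fst jk) (snd jk) x) (Cconj (psi_jk psi (fst jk) (snd jk) y))).

(* K_eps(x,y) := the sum of the series (chosen value; meaningful when it converges) *)
Definition Kern (psi : R -> Cx) (eps : Z -> Z -> R) (x y : R) : Cx :=
  epsilon (inhabits C0) (fun s => HasSumC (kernel_term psi eps x y) s).

(* Main.v *)
Require Import Defs.
From Stdlib Require Import Reals ZArith Lra Lia List Permutation Classical ClassicalEpsilon.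
Open Scope R_scope.

Fixpoint lsum {A} (f : A -> R) (l : list A) : R :=
  match l with nil => 0 | x :: l' => f x + lsum f l' end.

Lemma lsum_app {A} (f : A -> R) l1 l2 : lsum f (l1 ++ l2) = lsum f l1 + lsum f l2.
Proof. induction l1; simpl; [ring| rewrite IHl1; ring]. Qed.

Lemma lsum_nonneg {A} (f : A -> R) l : (forall x, 0 <= f x) -> 0 <= lsum f l.
Proof. intros H; induction l; simpl; [lra| specialize (H a); lra]. Qed.

Lemma lsum_le {A} (f g : A -> R) l : (forall x, In x l -> f x <= g x) -> lsum f l <= lsum g l.
Proof.
  induction l; simpl; intros H; [lra|].
  assert (f a <= g a) by (apply H; auto).
  assert (lsum f l <= lsum g l) by (apply IHl; intros; apply H; auto). lra.
Qed.

Lemma lsum_plus {A} (f g : A -> R) l : lsum (fun x => f x + g x) l = lsum f l + lsum g l.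
Proof. induction l; simpl; [ring| rewrite IHl; ring]. Qed.

Lemma lsum_scal {A} (f : A -> R) c l : lsum (fun x => c * f x) l = c * lsum f l.
Proof. induction l; simpl; [ring| rewrite IHl; ring]. Qed.

Lemma lsum_minus {A} (f g : A -> R) l : lsum (fun x => f x - g x) l = lsum f l - lsum g l.
Proof. induction l; simpl; [ring| rewrite IHl; ring]. Qed.

Lemma lsum_abs {A} (f : A -> R) l : Rabs (lsum f l) <= lsum (fun x => Rabs (f x)) l.
Proof.
  induction l; simpl. rewrite Rabs_R0; lra.
  eapply Rle_trans. apply Rabs_triang. lra.
Qed.

Lemma lsum_ext {A} (f g : A -> R) l : (forall x, f x = g x) -> lsum f l = lsum g l.
Proof. intros H; induction l; simpl; [auto| rewrite H, IHl; auto]. Qed.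

Lemma lsum_perm {A} (f : A -> R) l l' : Permutation l l' -> lsum f l = lsum f l'.
Proof. induction 1; simpl; try lra. Qed.

Lemma lsum_map {A B} (f : B -> R) (g : A -> B) l : lsum f (map g l) = lsum (fun x => f (g x)) l.
Proof. induction l; simpl; [auto| rewrite IHl; auto]. Qed.

Lemma lsum_prod {A B} (f : A * B -> R) l1 l2 :
  lsum f (list_prod l1 l2) = lsum (fun a => lsum (fun b => f (a, b)) l2) l1.
Proof.
  induction l1; simpl; auto. rewrite lsum_app, lsum_map, IHl1. auto.
Qed.

Lemma lsum_seq (f : nat -> R) n : lsum f (seq 0 (S n)) = sum_f_R0 f n.
Proof.
  induction n. simpl. ring.
  rewrite seq_S, lsum_app, IHn. simpl. ring.
Qed.

Lemma sub_sum {A} (f : A -> R) (F G : list A) :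
  (forall x, 0 <= f x) -> NoDup F -> incl F G -> lsum f F <= lsum f G.
Proof.
  intros Hf HF; revert G; induction HF as [|a F' Hna HF' IH]; intros G HG; simpl.
  - apply lsum_nonneg; auto.
  - assert (Ha : In a G) by (apply HG; simpl; auto).
    destruct (in_split _ _ Ha) as [G1 [G2 ->]].
    assert (incl F' (G1 ++ G2)).
    { intros x Hx. assert (Hx' : In x (G1 ++ a :: G2)) by (apply HG; simpl; auto).
      apply in_app_or in Hx'. apply in_or_app. destruct Hx' as [H|[H|H]]; auto.
      subst; contradiction. }
    specialize (IH _ H). rewrite lsum_app in *. simpl. lra.
Qed.

Lemma lsum_filter {A} (f : A -> R) (p : A -> bool) l :
  lsum f l = lsum f (filter p l) + lsum f (filter (fun x => negb (p x)) l).
Proof.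
  induction l; simpl; [ring|]. destruct (p a); simpl; rewrite IHl; ring.
Qed.

Lemma lsum_split_sub {A} (dec : forall x y : A, {x = y} + {x <> y}) (f : A -> R) F F0 :
  NoDup F -> NoDup F0 -> incl F0 F ->
  lsum f F = lsum f F0 +
     lsum f (filter (fun x => negb (if in_dec dec x F0 then true else false)) F).
Proof.
  intros HF HF0 Hi.
  rewrite (lsum_filter f (fun x => if in_dec dec x F0 then true else false) F).
  f_equal. apply lsum_perm. apply NoDup_Permutation.
  - apply NoDup_filter; auto.
  - auto.
  - intros x; rewrite filter_In. destruct (in_dec dec x F0); split; intros H; auto.
    all: try (destruct H; discriminate); try contradiction.
Qed.

Lemma nat_list_bound (L : list nat) : exists K, forall n, In n L -> (n <= K)%nat.
Proof.
  induction L. exists 0%nat; simpl; tauto.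
  destruct IHL as [K HK]. exists (Nat.max a K). intros n [->|H]. lia. specialize (HK n H); lia.
Qed.

Lemma sum_nat_NoDup (f : nat -> R) (L : list nat) : (forall n, 0 <= f n) -> NoDup L ->
  exists K, lsum f L <= sum_f_R0 f K.
Proof.
  intros Hf HL. destruct (nat_list_bound L) as [K HK]. exists K.
  rewrite <- lsum_seq. apply sub_sum; auto. intros x Hx. apply in_seq. specialize (HK x Hx). lia.
Qed.

Lemma cover_len {I} (A B : I -> R) (L : list I) c x :
  (forall i, A i <= B i) -> c <= x ->
  (forall y, c <= y <= x -> exists i, In i L /\ A i < y < B i) ->
  x - c < lsum (fun i => B i - A i) L.
Proof.
  intros HAB. remember (length L) as n eqn:Hn.
  assert (Hle : (length L <= n)%nat) by lia. clear Hn. revert L x Hle.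
  induction n; intros L x Hle Hcx Hcov.
  - destruct (Hcov x) as [i [Hi _]]; [lra|]. destruct L; simpl in *; [contradiction| lia].
  - destruct (Hcov x) as [i [Hi Hix]]; [lra|].
    destruct (in_split _ _ Hi) as [L1 [L2 ->]].
    rewrite lsum_app. simpl.
    assert (Hs : lsum (fun i0 => B i0 - A i0) (L1 ++ L2) =
                 lsum (fun i0 => B i0 - A i0) L1 + lsum (fun i0 => B i0 - A i0) L2)
      by apply lsum_app.
    destruct (Rlt_or_le (A i) c) as [Hac|Hca].
    + assert (0 <= lsum (fun i0 => B i0 - A i0) L1) by (apply lsum_nonneg; intros; specialize (HAB x0); lra).
      assert (0 <= lsum (fun i0 => B i0 - A i0) L2) by (apply lsum_nonneg; intros; specialize (HAB x0); lra).
      lra.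
    + assert (IH : A i - c < lsum (fun i0 => B i0 - A i0) (L1 ++ L2)).
      { apply IHn; auto.
        - rewrite app_length in *; simpl in Hle; lia.
        - intros y Hy. destruct (Hcov y) as [j [Hj Hjy]]; [lra|].
          exists j; split; auto. apply in_app_or in Hj. apply in_or_app.
          destruct Hj as [Hj|[Hj|Hj]]; auto. subst j; lra. }
      lra.
Qed.

Lemma compact_cover {I} (A B : I -> R) c d :
  c <= d -> (forall y, c <= y <= d -> exists i, A i < y < B i) ->
  exists L : list I, forall y, c <= y <= d -> exists i, In i L /\ A i < y < B i.
Proof.
  intros Hcd Hcov.
  set (E := fun x => c <= x <= d /\ exists L : list I, forall y, c <= y <= x -> exists i, In i L /\ A i < y < B i).
  assert (HEc : E c).
  { split; [lra|]. destruct (Hcov c) as [i0 Hi0]; [lra|]. exists (i0 :: nil).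
    intros y Hy. exists i0. split; [simpl; auto|]. replace y with c by lra. auto. }
  assert (Hb : bound E) by (exists d; intros x [Hx _]; lra).
  destruct (completeness E Hb (ex_intro _ c HEc)) as [s [Hub Hlub]].
  assert (Hcs : c <= s) by (apply Hub; auto).
  assert (Hsd : s <= d) by (apply Hlub; intros x [Hx _]; lra).
  destruct (Hcov s) as [i Hi]; [lra|].
  assert (Hex : exists x, E x /\ A i < x).
  { apply NNPP; intros Hn. assert (s <= A i); [|lra].
    apply Hlub. intros x Hx. destruct (Rle_or_lt x (A i)); auto. exfalso; apply Hn; eauto. }
  destruct Hex as [x [[Hx [L HL]] Hax]].
  assert (Hxs : x <= s) by (apply Hub; split; auto; exists L; auto).
  assert (Key : forall z, c <= z -> z <= (s + B i) / 2 ->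
            forall y, c <= y <= z -> exists j, In j (i :: L) /\ A j < y < B j).
  { intros z Hcz Hz y Hy. destruct (Rle_or_lt y x) as [Hyx|Hyx].
    - destruct (HL y) as [j [Hj Hj']]; [lra|]. exists j; split; simpl; auto.
    - exists i; split; simpl; auto. lra. }
  destruct (Rle_or_lt d ((s + B i) / 2)) as [Hd|Hd].
  - exists (i :: L). apply Key; lra.
  - exfalso. assert ((s + B i) / 2 <= s); [|lra].
    apply Hub. split; [lra|]. exists (i :: L). apply Key; lra.
Qed.

Lemma natdec : forall x y : nat, {x = y} + {x <> y}.
Proof. decide equality. Qed.

Lemma null_interval N c d : Null N -> c < d -> exists x, c < x < d /\ ~ N x.
Proof.
  intros HN Hcd. apply NNPP; intros Hn.
  assert (HN' : forall x, c < x < d -> N x).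
  { intros x Hx. apply NNPP; intros Hx'. apply Hn; eauto. }
  set (c' := c + (d - c) / 3). set (d' := d - (d - c) / 3).
  destruct (HN ((d' - c') / 2)) as [a [b [Hab [Hcov Hsum]]]]. unfold c', d'; lra.
  destruct (compact_cover a b c' d') as [L HL]. unfold c', d'; lra.
  { intros y Hy. apply Hcov, HN'. unfold c', d' in *; lra. }
  assert (H1 : d' - c' < lsum (fun i => b i - a i) (nodup natdec L)).
  { apply cover_len; auto. unfold c', d'; lra.
    intros y Hy. destruct (HL y Hy) as [i [Hi Hi']]. exists i; split; auto. apply nodup_In; auto. }
  destruct (sum_nat_NoDup (fun i => b i - a i) (nodup natdec L)) as [K HK].
  intros n; specialize (Hab n); lra. apply NoDup_nodup.
  specialize (Hsum K). unfold c', d' in *. lra.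
Qed.

Lemma deriv_loc_lip f x l : derivable_pt_lim f x l ->
  exists del, 0 < del /\ forall s, Rabs (s - x) < del -> Rabs (f s - f x) <= (Rabs l + 1) * Rabs (s - x).
Proof.
  intros H. destruct (H 1 Rlt_0_1) as [[del Hdel] Hd]. simpl in Hd.
  exists del; split; auto. intros s Hs.
  destruct (Req_dec s x) as [->|Hsx].
  - replace (f x - f x) with 0 by ring; replace (x - x) with 0 by ring; rewrite Rabs_R0; lra.
  - specialize (Hd (s - x)). replace (x + (s - x)) with s in Hd by ring.
    assert (Hne : s - x <> 0) by lra.
    specialize (Hd Hne Hs).
    set (q := (f s - f x) / (s - x)) in *.
    assert (Hq : f s - f x = q * (s - x)) by (unfold q; field; auto).
    rewrite Hq, Rabs_mult.
    assert (Rabs q <= Rabs l + 1).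
    { replace q with ((q - l) + l) by ring. eapply Rle_trans. apply Rabs_triang. lra. }
    apply Rmult_le_compat_r; auto. apply Rabs_pos.
Qed.

Lemma deriv_cont f x l : derivable_pt_lim f x l ->
  forall e, 0 < e -> exists del, 0 < del /\ forall u, Rabs (u - x) < del -> Rabs (f u - f x) < e.
Proof.
  intros H e He. destruct (deriv_loc_lip f x l H) as [del [Hdel Hd]].
  assert (HL : 0 < Rabs l + 1) by (pose proof (Rabs_pos l); lra).
  exists (Rmin del (e / (Rabs l + 1) / 2)). split.
  - apply Rmin_pos; auto. apply Rdiv_lt_0_compat; [|lra]. apply Rdiv_lt_0_compat; lra.
  - intros u Hu. assert (Hu1 : Rabs (u - x) < del) by (eapply Rlt_le_trans; [apply Hu| apply Rmin_l]).
    assert (Hu2 : Rabs (u - x) < e / (Rabs l + 1) / 2) by (eapply Rlt_le_trans; [apply Hu| apply Rmin_r]).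
    eapply Rle_lt_trans. apply Hd; auto.
    assert (Rabs (u - x) * (Rabs l + 1) < e / 2).
    { replace (e/2) with ((e / (Rabs l + 1) / 2) * (Rabs l + 1)) by (field; lra).
      apply Rmult_lt_compat_r; auto. }
    lra.
Qed.

Lemma crossing h h' a b y : (forall t, derivable_pt_lim h t (h' t)) -> a <= b -> h a < y < h b ->
  exists s, a <= s <= b /\ h s = y /\ 0 <= h' s.
Proof.
  intros Hd Hab Hy.
  set (E := fun t => a <= t <= b /\ h t <= y).
  assert (HEa : E a) by (split; lra).
  assert (Hb : bound E) by (exists b; intros t [Ht _]; lra).
  destruct (completeness E Hb (ex_intro _ a HEa)) as [s [Hub Hlub]].
  assert (Has : a <= s) by (apply Hub; auto).
  assert (Hsb : s <= b) by (apply Hlub; intros t [Ht _]; lra).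
  assert (H1 : h s <= y).
  { destruct (Rle_or_lt (h s) y) as [H|H]; auto. exfalso.
    destruct (deriv_cont h s (h' s) (Hd s) (h s - y)) as [del [Hdel Hc]]; [lra|].
    assert (s <= s - del / 2); [|lra].
    apply Hlub. intros t [Ht Hty]. destruct (Rle_or_lt t (s - del/2)) as [Hl|Hl]; auto. exfalso.
    assert (t <= s) by (apply Hub; split; auto).
    assert (Hts : Rabs (t - s) < del) by (apply Rabs_def1; lra).
    specialize (Hc t Hts). apply Rabs_def2 in Hc. lra. }
  assert (H2 : y <= h s).
  { destruct (Rle_or_lt y (h s)) as [H|H]; auto. exfalso.
    assert (Hsb' : s < b) by (destruct (Req_dec s b); [subst; lra| lra]).
    destruct (deriv_cont h s (h' s) (Hd s) (y - h s)) as [del [Hdel Hc]]; [lra|].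
    set (t := Rmin b (s + del / 2)).
    assert (Ht1 : s < t) by (unfold t; apply Rmin_glb_lt; lra).
    assert (Ht2 : t <= s + del / 2) by apply Rmin_r.
    assert (Ht3 : t <= b) by apply Rmin_l.
    assert (Hts : Rabs (t - s) < del) by (apply Rabs_def1; lra).
    specialize (Hc t Hts). apply Rabs_def2 in Hc.
    assert (t <= s) by (apply Hub; split; [lra| lra]). lra. }
  exists s; split; auto; split; [lra|].
  destruct (Rle_or_lt 0 (h' s)) as [H|H]; auto. exfalso.
  assert (Hsb' : s < b) by (destruct (Req_dec s b); [subst; lra| lra]).
  destruct (Hd s (- h' s / 2)) as [[del Hdel] Hdd]; [lra|]. simpl in Hdd.
  set (k := Rmin (del / 2) (b - s)).
  assert (Hk1 : 0 < k) by (unfold k; apply Rmin_pos; lra).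
  assert (Hk2 : k <= del / 2) by apply Rmin_l.
  assert (Hk3 : k <= b - s) by apply Rmin_r.
  assert (Hk0 : k <> 0) by lra.
  assert (Hka : Rabs k < del) by (rewrite Rabs_right; lra).
  specialize (Hdd k Hk0 Hka). apply Rabs_def2 in Hdd.
  set (q := (h (s + k) - h s) / k) in *.
  assert (Hq : h (s + k) - h s = q * k) by (unfold q; field; auto).
  assert (q * k < 0) by nra.
  assert (s + k <= s) by (apply Hub; split; [lra| lra]). lra.
Qed.

Lemma pairdec : forall x y : nat * nat, {x = y} + {x <> y}.
Proof. decide equality; apply Nat.eq_dec. Qed.

Lemma pair_list_bound (L : list (nat * nat)) : exists K, forall p, In p L -> (fst p <= K /\ snd p <= K)%nat.
Proof.
  induction L. exists 0%nat; simpl; tauto.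
  destruct IHL as [K HK]. exists (Nat.max (Nat.max (fst a) (snd a)) K).
  intros p [->|H]. lia. specialize (HK p H); lia.
Qed.

Lemma term_le_sum (f : nat -> R) i : (forall k, 0 <= f k) -> f i <= sum_f_R0 f i.
Proof. intros H; destruct i; simpl; [lra|]. pose proof (cond_pos_sum f i H). lra. Qed.

Lemma geom_sum m : lsum (fun n => / 2 ^ (S n)) (seq 0 m) = 1 - / 2 ^ m.
Proof.
  induction m. simpl. field.
  rewrite seq_S, lsum_app, IHm. simpl. field. apply pow_nonzero; lra.
Qed.

Lemma exists_big_nat (del L : R) : 0 < del -> exists n : nat, L <= INR (S n) /\ / INR (S n) < del.
Proof.
  intros Hd. destruct (archimed_cor1 del Hd) as [N1 [H1 H1']].
  destruct (archimed_cor1 (/ (Rabs L + 1))) as [N2 [H2 H2']].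
  { apply Rinv_0_lt_compat. pose proof (Rabs_pos L); lra. }
  exists (N1 + N2)%nat. split.
  - assert (Rabs L + 1 < INR N2).
    { apply lt_INR in H2'. simpl in H2'.
      rewrite <- (Rinv_inv (INR N2)). rewrite <- (Rinv_inv (Rabs L + 1)).
      apply Rinv_lt_contravar; auto. apply Rmult_lt_0_compat; apply Rinv_0_lt_compat; auto.
      pose proof (Rabs_pos L); lra. }
    rewrite S_INR, plus_INR. pose proof (pos_INR N1). pose proof (Rle_abs L). lra.
  - eapply Rle_lt_trans; [|apply H1]. apply lt_INR in H1'. simpl in H1'.
    apply Rinv_le_contravar; auto. rewrite S_INR, plus_INR. pose proof (pos_INR N2); lra.
Qed.

Lemma deriv_neg_decr h h' N a b :
  (forall t, derivable_pt_lim h t (h' t)) -> Null N -> a <= b ->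
  (forall t, a <= t <= b -> ~ N t -> h' t < 0) -> h b <= h a.
Proof.
  intros Hd HN Hab Hneg. apply Rnot_lt_le; intros Hlt.
  set (c := h a + (h b - h a) / 3). set (d := h b - (h b - h a) / 3).
  assert (Hcd : c < d) by (unfold c, d; lra).
  set (Nn := fun (n : nat) t => N t /\ forall u, Rabs (u - t) < / INR (S n) ->
                 Rabs (h u - h t) <= INR (S n) * Rabs (u - t)).
  assert (HNn : forall t, N t -> exists n, Nn n t).
  { intros t Ht. destruct (deriv_loc_lip h t (h' t) (Hd t)) as [del [Hdel Hl]].
    destruct (exists_big_nat del (Rabs (h' t) + 1) Hdel) as [n [Hn1 Hn2]].
    exists n; split; auto. intros u Hu. eapply Rle_trans. apply Hl; lra.
    apply Rmult_le_compat_r; auto. apply Rabs_pos. }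
  set (e := Rmin 1 ((d - c) / 2)).
  assert (He : 0 < e) by (unfold e; apply Rmin_pos; lra).
  assert (He1 : e <= 1) by apply Rmin_l.
  assert (He2 : e <= (d - c) / 2) by apply Rmin_r.
  set (epsn := fun n : nat => e / (2 * INR (S n) * 2 ^ (S n))).
  assert (Hpow : forall n, 1 <= 2 ^ n) by (intros; apply pow_R1_Rle; lra).
  assert (HSn : forall n : nat, 1 <= INR (S n)) by (intros; rewrite S_INR; pose proof (pos_INR n); lra).
  assert (Hepsn : forall n, 0 < epsn n).
  { intros n; unfold epsn. apply Rdiv_lt_0_compat; auto.
    specialize (Hpow (S n)); specialize (HSn n). nra. }
  assert (Hepsn2 : forall n, epsn n < / INR (S n)).
  { intros n; unfold epsn. specialize (Hpow (S n)); specialize (HSn n).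
    apply Rmult_lt_reg_l with (INR (S n)); [lra|]. rewrite Rinv_r by lra.
    unfold Rdiv. rewrite Rinv_mult, Rinv_mult.
    replace (INR (S n) * (e * (/ 2 * / INR (S n) * / 2 ^ S n))) with (e / 2 * / 2 ^ S n)
      by (field; split; lra).
    assert (/ 2 ^ S n <= 1). { rewrite <- Rinv_1. apply Rinv_le_contravar; lra. }
    assert (0 < / 2 ^ S n) by (apply Rinv_0_lt_compat; lra). nra. }
  set (P := fun n (ab : (nat -> R) * (nat -> R)) =>
          (forall i, fst ab i <= snd ab i) /\ (forall x, N x -> exists i, fst ab i < x < snd ab i) /\
          (forall K, sum_f_R0 (fun i => snd ab i - fst ab i) K <= epsn n)).
  set (cov := fun n => epsilon (inhabits ((fun _ : nat => 0), (fun _ : nat => 0))) (P n)).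
  assert (Hcov : forall n, P n (cov n)).
  { intros n. unfold cov. apply epsilon_spec.
    destruct (HN (epsn n) (Hepsn n)) as [a0 [b0 Hab0]]. exists (a0, b0). exact Hab0. }
  set (an := fun n i => fst (cov n) i). set (bn := fun n i => snd (cov n) i).
  set (pk := fun n i => epsilon (inhabits 0) (fun t => Nn n t /\ an n i < t < bn n i)).
  set (JA := fun p : nat * nat => h (pk (fst p) (snd p)) - INR (S (fst p)) * (bn (fst p) (snd p) - an (fst p) (snd p))).
  set (JB := fun p : nat * nat => h (pk (fst p) (snd p)) + INR (S (fst p)) * (bn (fst p) (snd p) - an (fst p) (snd p))).
  assert (Hlen0 : forall n i, 0 <= bn n i - an n i).
  { intros n i. destruct (Hcov n) as [H1 _]. specialize (H1 i). unfold an, bn; lra. }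
  assert (Hlen1 : forall n i, bn n i - an n i <= epsn n).
  { intros n i. destruct (Hcov n) as [_ [_ H3]].
    eapply Rle_trans; [| apply (H3 i)]. apply (term_le_sum (fun i => bn n i - an n i)); auto. }
  assert (HJ : forall p, JA p <= JB p).
  { intros [n i]. unfold JA, JB; cbn [fst snd]. specialize (Hlen0 n i). specialize (HSn n).
    assert (0 <= INR (S n) * (bn n i - an n i)) by (apply Rmult_le_pos; lra). lra. }
  assert (Hcover : forall y, c <= y <= d -> exists p, JA p < y < JB p).
  { intros y Hy.
    destruct (crossing h h' a b y Hd Hab) as [s [Hs1 [Hs2 Hs3]]]. unfold c, d in Hy; lra.
    assert (HNs : N s) by (apply NNPP; intros HNs; specialize (Hneg s Hs1 HNs); lra).
    destruct (HNn s HNs) as [n Hn].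
    destruct (Hcov n) as [_ [H2 _]]. destruct (H2 s HNs) as [i Hi].
    exists (n, i).
    assert (Hpk : Nn n (pk n i) /\ an n i < pk n i < bn n i).
    { unfold pk. apply epsilon_spec. exists s; split; auto. }
    destruct Hpk as [[_ Hpk1] Hpk2].
    assert (Hdist : Rabs (s - pk n i) < bn n i - an n i).
    { apply Rabs_def1; unfold an, bn in *; lra. }
    assert (Hdist2 : Rabs (s - pk n i) < / INR (S n)).
    { specialize (Hlen1 n i). specialize (Hepsn2 n). lra. }
    specialize (Hpk1 s Hdist2).
    assert (Hlt2 : Rabs (h s - h (pk n i)) < INR (S n) * (bn n i - an n i)).
    { eapply Rle_lt_trans; [apply Hpk1|]. apply Rmult_lt_compat_l; auto. specialize (HSn n); lra. }
    apply Rabs_def2 in Hlt2. unfold JA, JB; cbn [fst snd]. lra. }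
  destruct (compact_cover JA JB c d) as [L HL]; [lra| exact Hcover|].
  assert (H1 : d - c < lsum (fun p => JB p - JA p) (nodup pairdec L)).
  { apply cover_len; auto. lra.
    intros y Hy. destruct (HL y Hy) as [p [Hp Hp']]. exists p; split; auto. apply nodup_In; auto. }
  destruct (pair_list_bound L) as [K HK].
  assert (H2 : lsum (fun p => JB p - JA p) (nodup pairdec L) <=
               lsum (fun p => JB p - JA p) (list_prod (seq 0 (S K)) (seq 0 (S K)))).
  { apply sub_sum. intros p; specialize (HJ p); lra. apply NoDup_nodup.
    intros [n i] Hp. apply nodup_In in Hp. apply HK in Hp. simpl in Hp.
    apply in_prod_iff; split; apply in_seq; lia. }
  rewrite lsum_prod in H2.
  assert (H3 : lsum (fun n => lsum (fun i => JB (n, i) - JA (n, i)) (seq 0 (S K))) (seq 0 (S K))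
               <= lsum (fun n => e * / 2 ^ (S n)) (seq 0 (S K))).
  { apply lsum_le. intros n _.
    rewrite (lsum_ext _ (fun i => (2 * INR (S n)) * (bn n i - an n i))) by (intros; unfold JA, JB; cbn [fst snd]; ring).
    rewrite lsum_scal, lsum_seq.
    destruct (Hcov n) as [_ [_ H3]]. specialize (H3 K).
    apply Rle_trans with (2 * INR (S n) * epsn n).
    - apply Rmult_le_compat_l. specialize (HSn n); lra. exact H3.
    - unfold epsn. right. field. split. apply pow_nonzero; lra. specialize (HSn n); lra. }
  rewrite lsum_scal, geom_sum in H3.
  assert (0 < / 2 ^ (S K)) by (apply Rinv_0_lt_compat; apply pow_lt; lra).
  assert (e * (1 - / 2 ^ S K) <= e) by nra.
  lra.
Qed.

Lemma deriv_bound_lip g g' N a b M :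
  (forall t, derivable_pt_lim g t (g' t)) -> Null N -> a <= b ->
  (forall t, a <= t <= b -> ~ N t -> Rabs (g' t) <= M) -> Rabs (g b - g a) <= M * (b - a).
Proof.
  intros Hd HN Hab HM.
  assert (Hup : forall M', M < M' -> g b - g a <= M' * (b - a)).
  { intros M' HM'.
    pose proof (deriv_neg_decr (fun t => g t - M' * t) (fun t => g' t - M') N a b) as H.
    assert (g b - M' * b <= g a - M' * a); [|lra].
    apply H; auto.
    - intros t. apply derivable_pt_lim_minus; auto.
      replace M' with (M' * 1) at 2 by ring. apply derivable_pt_lim_scal, derivable_pt_lim_id.
    - intros t Ht HNt. specialize (HM t Ht HNt). pose proof (Rle_abs (g' t)). lra. }
  assert (Hdown : forall M', M < M' -> g a - g b <= M' * (b - a)).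
  { intros M' HM'.
    pose proof (deriv_neg_decr (fun t => - g t - M' * t) (fun t => - g' t - M') N a b) as H.
    assert (- g b - M' * b <= - g a - M' * a); [|lra].
    apply H; auto.
    - intros t. apply derivable_pt_lim_minus; auto.
      apply derivable_pt_lim_opp; auto.
      replace M' with (M' * 1) at 2 by ring. apply derivable_pt_lim_scal, derivable_pt_lim_id.
    - intros t Ht HNt. specialize (HM t Ht HNt). pose proof (Rle_abs (- g' t)). rewrite Rabs_Ropp in H0. lra. }
  destruct (Req_dec a b) as [->|Hne].
  - replace (g b - g b) with 0 by ring. rewrite Rabs_R0. lra.
  - assert (Hba0 : 0 < b - a) by (destruct Hab as [Hab|Hab]; [lra| contradiction]).
    apply Rabs_le. split.
    + apply Rnot_lt_le; intros Hc.
      set (M' := M + (- (g b - g a) - M * (b - a)) / (2 * (b - a))).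
      assert (M < M') by (unfold M'; assert (0 < (- (g b - g a) - M * (b - a)) / (2 * (b - a))) by (apply Rdiv_lt_0_compat; lra); lra).
      specialize (Hdown M' H).
      unfold M' in Hdown. assert (Hba : 0 < b - a) by lra.
      replace ((M + (- (g b - g a) - M * (b - a)) / (2 * (b - a))) * (b - a))
        with (M * (b - a) + (- (g b - g a) - M * (b - a)) / 2) in Hdown by (field; lra). lra.
    + apply Rnot_lt_le; intros Hc.
      set (M' := M + ((g b - g a) - M * (b - a)) / (2 * (b - a))).
      assert (M < M') by (unfold M'; assert (0 < ((g b - g a) - M * (b - a)) / (2 * (b - a))) by (apply Rdiv_lt_0_compat; lra); lra).
      specialize (Hup M' H).
      unfold M' in Hup. assert (Hba : 0 < b - a) by lra.
      replace ((M + ((g b - g a) - M * (b - a)) / (2 * (b - a))) * (b - a))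
        with (M * (b - a) + ((g b - g a) - M * (b - a)) / 2) in Hup by (field; lra). lra.
Qed.

Lemma sqrt_le_of a b : 0 <= b -> a <= b * b -> sqrt a <= b.
Proof. intros Hb H. rewrite <- (sqrt_square b Hb). apply sqrt_le_1_alt; auto. Qed.

Lemma le_sqrt_of a b : 0 <= b -> b * b <= a -> b <= sqrt a.
Proof. intros Hb H. rewrite <- (sqrt_square b Hb). apply sqrt_le_1_alt; auto. Qed.

Lemma Cnorm_nonneg z : 0 <= Cnorm z.
Proof. apply sqrt_pos. Qed.

Lemma Cre_le z : Rabs (Cre z) <= Cnorm z.
Proof. unfold Cnorm. apply le_sqrt_of. apply Rabs_pos.
  rewrite <- Rabs_mult, Rabs_right by nra. nra. Qed.

Lemma Cim_le z : Rabs (Cim z) <= Cnorm z.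
Proof. unfold Cnorm. apply le_sqrt_of. apply Rabs_pos.
  rewrite <- Rabs_mult, Rabs_right by nra. nra. Qed.

Lemma Cnorm_le_sum z : Cnorm z <= Rabs (Cre z) + Rabs (Cim z).
Proof.
  unfold Cnorm. apply sqrt_le_of. pose proof (Rabs_pos (Cre z)); pose proof (Rabs_pos (Cim z)); lra.
  rewrite <- (pow2_abs (Cre z)), <- (pow2_abs (Cim z)).
  pose proof (Rabs_pos (Cre z)); pose proof (Rabs_pos (Cim z)). nra.
Qed.

Lemma Cnorm_mul z w : Cnorm (Cmul z w) = Cnorm z * Cnorm w.
Proof.
  unfold Cnorm, Cmul, Cre, Cim; destruct z as [a b], w as [c d]; cbn [fst snd].
  rewrite <- sqrt_mult by nra. f_equal. ring.
Qed.

Lemma Cnorm_conj z : Cnorm (Cconj z) = Cnorm z.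
Proof. unfold Cnorm, Cconj, Cre, Cim; destruct z; cbn [fst snd]. f_equal; ring. Qed.

Lemma Cnorm_scale r z : Cnorm (Cscale r z) = Rabs r * Cnorm z.
Proof.
  unfold Cnorm, Cscale, Cre, Cim; destruct z as [a b]; cbn [fst snd].
  rewrite <- sqrt_Rsqr_abs, <- sqrt_mult. 
  - f_equal. unfold Rsqr; ring.
  - apply Rle_0_sqr.
  - nra.
Qed.

Lemma Cnorm_add_le z w : Cnorm (Cadd z w) <= Cnorm z + Cnorm w.
Proof.
  unfold Cnorm, Cadd, Cre, Cim; destruct z as [a b], w as [c d]; cbn [fst snd].
  set (P := sqrt (a ^ 2 + b ^ 2)). set (Q := sqrt (c ^ 2 + d ^ 2)).
  assert (HP : P * P = a ^ 2 + b ^ 2) by (apply sqrt_sqrt; nra).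
  assert (HQ : Q * Q = c ^ 2 + d ^ 2) by (apply sqrt_sqrt; nra).
  assert (P0 : 0 <= P) by apply sqrt_pos. assert (Q0 : 0 <= Q) by apply sqrt_pos.
  apply sqrt_le_of. lra.
  assert (a * c + b * d <= P * Q).
  { destruct (Rle_or_lt (a * c + b * d) 0). nra.
    assert ((a * c + b * d) * (a * c + b * d) <= (P * Q) * (P * Q)).
    { replace ((P * Q) * (P * Q)) with ((P * P) * (Q * Q)) by ring. rewrite HP, HQ. pose proof (pow2_ge_0 (a*d - b*c)). nra. }
    destruct (Rle_or_lt (a*c+b*d) (P*Q)) as [Hx|Hx]; auto. assert (0 <= P*Q) by (apply Rmult_le_pos; auto). nra. }
  nra.
Qed.

Lemma Cnorm_sub_sym z w : Cnorm (Csub z w) = Cnorm (Csub w z).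
Proof. unfold Cnorm, Csub, Cre, Cim; destruct z, w; cbn [fst snd]. f_equal; ring. Qed.


Lemma ZZdec : forall x y : Z * Z, {x = y} + {x <> y}.
Proof. decide equality; apply Z.eq_dec. Qed.

Lemma Csum_re a F : Cre (Csum_list a F) = lsum (fun i => Cre (a i)) F.
Proof. induction F; simpl; auto. unfold Cadd, Cre at 1; cbn [fst]. rewrite <- IHF. auto. Qed.

Lemma Csum_im a F : Cim (Csum_list a F) = lsum (fun i => Cim (a i)) F.
Proof. induction F; simpl; auto. unfold Cadd, Cim at 1; cbn [snd]. rewrite <- IHF. auto. Qed.

Lemma Csum_norm a F : Cnorm (Csum_list a F) <= lsum (fun i => Cnorm (a i)) F.
Proof.
  induction F; simpl. unfold Cnorm, C0, Cre, Cim; cbn [fst snd].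
  replace (0 ^ 2 + 0 ^ 2) with 0 by ring. rewrite sqrt_0; lra.
  eapply Rle_trans. apply Cnorm_add_le. lra.
Qed.

Lemma Csum_sub a b F : Csub (Csum_list a F) (Csum_list b F) = Csum_list (fun i => Csub (a i) (b i)) F.
Proof.
  induction F; simpl. unfold Csub, C0, Cre, Cim; cbn [fst snd]. f_equal; ring.
  rewrite <- IHF. destruct (a a0), (b a0), (Csum_list a F), (Csum_list b F).
  unfold Csub, Cadd, Cre, Cim; cbn [fst snd]. f_equal; ring.
Qed.

Lemma Csub_split s t X Y : Csub s t = Cadd (Csub s X) (Cadd (Csub X Y) (Csub Y t)).
Proof. destruct s, t, X, Y; unfold Csub, Cadd, Cre, Cim; cbn [fst snd]. f_equal; ring. Qed.

Lemma HasSum_diff a b s t B :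
  HasSumC a s -> HasSumC b t ->
  (forall F, NoDup F -> lsum (fun i => Cnorm (Csub (a i) (b i))) F <= B) ->
  Cnorm (Csub s t) <= B.
Proof.
  intros Ha Hb HB. apply Rle_plus_epsilon. intros e He.
  destruct (Ha (e / 2)) as [Fa HFa]; [lra|]. destruct (Hb (e / 2)) as [Fb HFb]; [lra|].
  set (F := nodup ZZdec (Fa ++ Fb)).
  assert (HND : NoDup F) by apply NoDup_nodup.
  assert (H1 : Cnorm (Csub (Csum_list a F) s) < e / 2).
  { apply HFa; auto. intros x Hx. apply nodup_In. apply in_or_app; auto. }
  assert (H2 : Cnorm (Csub (Csum_list b F) t) < e / 2).
  { apply HFb; auto. intros x Hx. apply nodup_In. apply in_or_app; auto. }
  assert (H3 : Cnorm (Csub (Csum_list a F) (Csum_list b F)) <= B).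
  { rewrite Csum_sub. eapply Rle_trans. apply Csum_norm. apply HB; auto. }
  rewrite (Csub_split s t (Csum_list a F) (Csum_list b F)).
  eapply Rle_trans. apply Cnorm_add_le.
  pose proof (Cnorm_add_le (Csub (Csum_list a F) (Csum_list b F)) (Csub (Csum_list b F) t)).
  rewrite Cnorm_sub_sym in H1. lra.
Qed.

Lemma HasSum_zero : HasSumC (fun _ => C0) C0.
Proof.
  intros e He. exists nil. intros F _ _.
  assert (Csub (Csum_list (fun _ => C0) F) C0 = C0).
  { induction F; simpl. unfold Csub, C0, Cre, Cim; cbn [fst snd]; f_equal; ring.
    revert IHF. destruct (Csum_list (fun _ => C0) F). unfold Csub, Cadd, C0, Cre, Cim; cbn [fst snd].
    intros H. injection H; intros; f_equal; lra. }
  rewrite H. unfold Cnorm, C0, Cre, Cim; cbn [fst snd]. replace (0 ^ 2 + 0 ^ 2) with 0 by ring.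
  rewrite sqrt_0; lra.
Qed.

Lemma HasSum_bound a s B : HasSumC a s ->
  (forall F, NoDup F -> lsum (fun i => Cnorm (a i)) F <= B) -> Cnorm s <= B.
Proof.
  intros Ha HB.
  assert (Cnorm (Csub s C0) <= B).
  { apply (HasSum_diff a (fun _ => C0)); auto. apply HasSum_zero.
    intros F HF. eapply Rle_trans; [|apply (HB F HF)]. right. apply lsum_ext. intros i.
    destruct (a i); unfold Csub, C0, Cnorm, Cre, Cim; cbn [fst snd]. f_equal; ring. }
  replace (Csub s C0) with s in H; auto. destruct s; unfold Csub, C0, Cre, Cim; cbn [fst snd]; f_equal; ring.
Qed.

Lemma Cre_sub z w : Cre (Csub z w) = Cre z - Cre w.
Proof. reflexivity. Qed.
Lemma Cim_sub z w : Cim (Csub z w) = Cim z - Cim w.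
Proof. reflexivity. Qed.

Fixpoint flat (Fs : nat -> list (Z * Z)) (n : nat) : list (Z * Z) :=
  match n with 0%nat => Fs 0%nat | S m => flat Fs m ++ Fs (S m) end.

Lemma flat_incl Fs m n : (m <= n)%nat -> incl (Fs m) (flat Fs n).
Proof.
  induction n; intros H.
  - replace m with 0%nat by lia. simpl. apply incl_refl.
  - destruct (Nat.eq_dec m (S n)) as [->|Hne].
    + simpl. apply incl_appr, incl_refl.
    + simpl. apply incl_appl. apply IHn. lia.
Qed.

Lemma HasSum_exists a B : (forall F, NoDup F -> lsum (fun i => Cnorm (a i)) F <= B) ->
  exists s, HasSumC a s.
Proof.
  intros HB. set (g := fun i => Cnorm (a i)).
  set (E := fun r => exists F, NoDup F /\ r = lsum g F).
  assert (HE0 : E 0) by (exists nil; split; [constructor| reflexivity]).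
  assert (HEb : bound E) by (exists B; intros r [F [HF ->]]; apply HB; auto).
  destruct (completeness E HEb (ex_intro _ 0 HE0)) as [sig [Hub Hlub]].
  assert (Happ : forall e, 0 < e -> exists F, NoDup F /\ sig - e < lsum g F).
  { intros e He. apply NNPP; intros Hn. assert (sig <= sig - e); [|lra].
    apply Hlub. intros r [F [HF ->]]. apply Rnot_lt_le; intros Hc. apply Hn. eauto. }
  assert (Htail : forall e F0 F (f : Z*Z -> R), (forall i, Rabs (f i) <= g i) -> NoDup F0 ->
            sig - e < lsum g F0 -> NoDup F -> incl F0 F -> Rabs (lsum f F - lsum f F0) <= e).
  { intros e F0 F f Hf HF0 HF0s HF Hinc.
    rewrite (lsum_split_sub ZZdec f F F0 HF HF0 Hinc).
    pose proof (lsum_split_sub ZZdec g F F0 HF HF0 Hinc) as Hg.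
    assert (lsum g F <= sig) by (apply Hub; exists F; auto).
    match goal with |- Rabs (_ + lsum f ?R0 - _) <= _ =>
      replace (lsum f F0 + lsum f R0 - lsum f F0) with (lsum f R0) by ring;
      eapply Rle_trans; [apply lsum_abs|];
      eapply Rle_trans; [apply (lsum_le _ g); intros; apply Hf|]; lra end. }
  set (Fs := fun n : nat => epsilon (inhabits nil) (fun F => NoDup F /\ sig - / INR (S n) < lsum g F)).
  assert (HFs : forall n, NoDup (Fs n) /\ sig - / INR (S n) < lsum g (Fs n)).
  { intros n. unfold Fs. apply epsilon_spec. apply Happ. apply Rinv_0_lt_compat. apply lt_0_INR; lia. }
  set (Gs := fun n => nodup ZZdec (flat Fs n)).
  assert (HGs : forall m n, (m <= n)%nat -> incl (Fs m) (Gs n)).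
  { intros m n H x Hx. unfold Gs. apply nodup_In. apply (flat_incl Fs m n H); auto. }
  assert (HGnd : forall n, NoDup (Gs n)) by (intros; apply NoDup_nodup).
  assert (Hcomp : forall f : Z * Z -> R, (forall i, Rabs (f i) <= g i) -> exists l, forall e, 0 < e ->
            exists N, forall F, NoDup F -> incl (Fs N) F -> Rabs (lsum f F - l) < e).
  { intros f Hf.
    assert (Hk : forall N n, (N <= n)%nat -> Rabs (lsum f (Gs n) - lsum f (Fs N)) <= / INR (S N)).
    { intros N n H. destruct (HFs N) as [H1 H2]. apply (Htail _ _ _ f Hf H1 H2); auto. }
    assert (Hc : Cauchy_crit (fun n => lsum f (Gs n))).
    { intros e He. destruct (exists_big_nat (e / 2) 0) as [N [_ HN]]; [lra|].
      exists N. intros n m Hn Hm. unfold Rdist.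
      pose proof (Hk N n Hn). pose proof (Hk N m Hm).
      replace (lsum f (Gs n) - lsum f (Gs m)) with ((lsum f (Gs n) - lsum f (Fs N)) - (lsum f (Gs m) - lsum f (Fs N))) by ring.
      eapply Rle_lt_trans. apply Rabs_triang. rewrite Rabs_Ropp. lra. }
    destruct (R_complete _ Hc) as [l Hl]. exists l. intros e He.
    destruct (exists_big_nat (e / 4) 0) as [N1 [_ HN1]]; [lra|].
    destruct (Hl (e / 2)) as [N2 HN2]; [lra|].
    exists N1. intros F HF Hinc.
    set (n := Nat.max N1 N2).
    specialize (HN2 n ltac:(lia)). unfold Rdist in HN2.
    pose proof (Hk N1 n ltac:(lia)).
    destruct (HFs N1) as [H1 H2].
    pose proof (Htail _ _ _ f Hf H1 H2 HF Hinc).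
    replace (lsum f F - l) with ((lsum f F - lsum f (Fs N1)) - (lsum f (Gs n) - lsum f (Fs N1)) + (lsum f (Gs n) - l)) by ring.
    eapply Rle_lt_trans. apply Rabs_triang.
    pose proof (Rabs_triang (lsum f F - lsum f (Fs N1)) (- (lsum f (Gs n) - lsum f (Fs N1)))).
    rewrite Rabs_Ropp in H3.
    unfold Rminus at 1. lra. }
  destruct (Hcomp (fun i => Cre (a i))) as [lr Hlr]. intros i; apply Cre_le.
  destruct (Hcomp (fun i => Cim (a i))) as [li Hli]. intros i; apply Cim_le.
  exists (lr, li). intros e He.
  destruct (Hlr (e / 2)) as [N1 HN1]; [lra|]. destruct (Hli (e / 2)) as [N2 HN2]; [lra|].
  exists (Fs N1 ++ Fs N2). intros F HF Hinc.
  specialize (HN1 F HF (fun x Hx => Hinc x (in_or_app _ _ _ (or_introl Hx)))).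
  specialize (HN2 F HF (fun x Hx => Hinc x (in_or_app _ _ _ (or_intror Hx)))).
  eapply Rle_lt_trans. apply Cnorm_le_sum.
  rewrite Cre_sub, Cim_sub, Csum_re, Csum_im.
  change (Cre (lr, li)) with lr; change (Cim (lr, li)) with li. lra.
Qed.

Definition zrange (m : Z) (n : nat) : list Z := map (fun i => (m + Z.of_nat i)%Z) (seq 0 n).

Lemma zrange_S m n : zrange m (S n) = zrange m n ++ ((m + Z.of_nat n)%Z :: nil).
Proof. unfold zrange. rewrite seq_S, map_app. reflexivity. Qed.

Lemma telescope_range (g T : Z -> R) m n : (forall j, g j <= T j - T (j - 1)%Z) ->
  lsum g (zrange m n) <= T (m + Z.of_nat n - 1)%Z - T (m - 1)%Z.
Proof.
  intros H. induction n.
  - simpl. replace (m + 0 - 1)%Z with (m - 1)%Z by lia. lra.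
  - rewrite zrange_S, lsum_app. simpl.
    specialize (H (m + Z.of_nat n)%Z).
    replace (m + Z.pos (Pos.of_succ_nat n) - 1)%Z with (m + Z.of_nat n)%Z by lia. lra.
Qed.

Lemma Z_list_bound (J : list Z) : exists N, forall j, In j J -> (- Z.of_nat N <= j <= Z.of_nat N)%Z.
Proof.
  induction J. exists 0%nat; simpl; tauto.
  destruct IHJ as [N HN]. exists (Nat.max (Z.to_nat (Z.abs a)) N).
  intros j [->|Hj]. lia. specialize (HN j Hj). lia.
Qed.

Lemma in_zrange N j : (- Z.of_nat N <= j <= Z.of_nat N)%Z -> In j (zrange (- Z.of_nat N) (S (2 * N))).
Proof.
  intros H. unfold zrange. apply in_map_iff. exists (Z.to_nat (j + Z.of_nat N)).
  split. lia. apply in_seq. lia.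
Qed.

Lemma telescope_Z (g T : Z -> R) lo hi : (forall j, 0 <= g j) -> (forall j, g j <= T j - T (j - 1)%Z) ->
  (forall j, lo <= T j <= hi) -> forall J, NoDup J -> lsum g J <= hi - lo.
Proof.
  intros Hg HT Hb J HJ. destruct (Z_list_bound J) as [N HN].
  eapply Rle_trans. apply (sub_sum g J (zrange (- Z.of_nat N) (S (2 * N)))); auto.
  intros j Hj; apply in_zrange; auto.
  eapply Rle_trans. apply telescope_range; auto.
  pose proof (Hb (- Z.of_nat N + Z.of_nat (S (2 * N)) - 1)%Z). pose proof (Hb (- Z.of_nat N - 1)%Z). lra.
Qed.

Lemma frac_le a b c d : 0 < b -> 0 < d -> a * d <= c * b -> a / b <= c / d.
Proof.
  intros Hb Hd H. apply Rmult_le_reg_r with (b * d). nra.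
  replace (a / b * (b * d)) with (a * d) by (field; lra).
  replace (c / d * (b * d)) with (c * b) by (field; lra). auto.
Qed.

Definition G (u : R) := u / (1 + Rabs u).

Lemma G_bound u : -1 <= G u <= 1.
Proof.
  unfold G. pose proof (Rabs_pos u). split.
  - apply Rmult_le_reg_r with (1 + Rabs u); [lra|]. unfold Rdiv; rewrite Rmult_assoc, Rinv_l by lra.
    pose proof (Rle_abs (- u)); rewrite Rabs_Ropp in *; lra.
  - apply Rmult_le_reg_r with (1 + Rabs u); [lra|]. unfold Rdiv; rewrite Rmult_assoc, Rinv_l by lra.
    pose proof (Rle_abs u); lra.
Qed.

Lemma G_step u : / (1 + u ^ 2) <= 4 * (G (u + 1) - G u).
Proof.
  unfold G. destruct (Rle_or_lt 0 u) as [H0|H0].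
  - rewrite (Rabs_right u), (Rabs_right (u + 1)) by lra.
    replace (4 * ((u + 1) / (1 + (u + 1)) - u / (1 + u))) with (4 / ((u + 2) * (1 + u))) by (field; lra).
    rewrite <- (Rmult_1_l (/ _)). change (1 * / (1 + u ^ 2)) with (1 / (1 + u ^ 2)).
    apply frac_le; nra.
  - destruct (Rle_or_lt (u + 1) 0) as [H1|H1].
    + rewrite (Rabs_left u), (Rabs_left1 (u + 1)) by lra.
      replace (4 * ((u + 1) / (1 + - (u + 1)) - u / (1 + - u))) with (4 / ((- u) * (1 - u))) by (field; lra).
      rewrite <- (Rmult_1_l (/ _)). change (1 * / (1 + u ^ 2)) with (1 / (1 + u ^ 2)).
      apply frac_le; nra.
    + rewrite (Rabs_left u), (Rabs_right (u + 1)) by lra.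
      replace (4 * ((u + 1) / (1 + (u + 1)) - u / (1 + - u))) with (4 * ((u + 1) * (1 - u) - u * (u + 2)) / ((u + 2) * (1 - u))) by (field; lra).
      rewrite <- (Rmult_1_l (/ _)). change (1 * / (1 + u ^ 2)) with (1 / (1 + u ^ 2)).
      apply frac_le; nra.
Qed.

Lemma ksum_phi (a : R) (K : list Z) : NoDup K ->
  lsum (fun k => / (1 + (a - IZR k) ^ 2)) K <= 8.
Proof.
  intros HK.
  replace 8 with (4 - (-4)) by ring.
  apply (telescope_Z _ (fun k => 4 * G (IZR k + 1 - a))).
  - intros j. apply Rlt_le, Rinv_0_lt_compat. pose proof (pow2_ge_0 (a - IZR j)); lra.
  - intros j. rewrite minus_IZR. cbv beta.
    replace ((a - IZR j) ^ 2) with ((IZR j - a) ^ 2) by ring.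
    pose proof (G_step (IZR j - a)).
    replace (IZR j - a + 1) with (IZR j + 1 - a) in H by ring.
    replace (IZR j - 1 + 1 - a) with (IZR j - a) by ring. lra.
  - intros j. pose proof (G_bound (IZR j + 1 - a)). lra.
  - auto.
Qed.

Lemma pow2Z_pos j : 0 < powerRZ 2 j.
Proof. apply powerRZ_lt; lra. Qed.

Lemma pow2Z_S j : powerRZ 2 (j + 1) = 2 * powerRZ 2 j.
Proof. rewrite powerRZ_add by lra. simpl. ring. Qed.

Lemma pow2Z_P j : powerRZ 2 j = 2 * powerRZ 2 (j - 1).
Proof. rewrite <- pow2Z_S. f_equal. lia. Qed.

Definition F4 (u : R) := 4 * u / (1 + u).

Lemma jsum_phi (rho : R) (J : list Z) : 0 < rho -> NoDup J ->
  lsum (fun j => powerRZ 2 j * / (1 + (powerRZ 2 j * rho) ^ 2)) J <= 4 / rho.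
Proof.
  intros Hr HJ.
  replace (4 / rho) with (4 / rho - 0) by ring.
  apply (telescope_Z _ (fun j => F4 (2 * powerRZ 2 j * rho) / rho)).
  - intros j. pose proof (pow2Z_pos j). apply Rmult_le_pos; [lra|]. apply Rlt_le, Rinv_0_lt_compat. nra.
  - intros j. rewrite (pow2Z_P j). set (p := powerRZ 2 (j - 1)).
    assert (Hp : 0 < p) by apply pow2Z_pos. unfold F4.
    set (u := 2 * p * rho). assert (Hu : 0 < u) by (unfold u; nra).
    replace (2 * p) with (u / rho) by (unfold u; field; lra).
    replace (4 * (2 * (u / rho) * rho) / (1 + 2 * (u / rho) * rho) / rho - 4 * u / (1 + u) / rho)
      with ((4 * u) / (rho * ((1 + 2 * u) * (1 + u)))) by (field; split; lra).
    replace (u / rho * / (1 + (u / rho * rho) ^ 2)) with (u / (rho * (1 + u ^ 2))) by (field; split; nra).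
    apply frac_le; try nra.
    assert (0 <= 3 - 3 * u + 2 * u ^ 2) by nra.
    assert (0 < rho * u) by nra. replace (u / rho * (rho * ((1 + 2 * u) * (1 + u)))) with (u * ((1 + 2 * u) * (1 + u))) by (field; lra). nra.
  - intros j. pose proof (pow2Z_pos j). unfold F4. set (u := 2 * powerRZ 2 j * rho).
    assert (0 < u) by (unfold u; nra). split.
    + apply Rmult_le_pos; [|apply Rlt_le, Rinv_0_lt_compat; auto].
      apply Rmult_le_pos; [lra|]. apply Rlt_le, Rinv_0_lt_compat; lra.
    + unfold Rdiv. apply Rmult_le_compat_r. apply Rlt_le, Rinv_0_lt_compat; auto.
      apply Rmult_le_reg_r with (1 + u); [lra|]. rewrite Rmult_assoc, Rinv_l by lra. lra.
  - auto.
Qed.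

Definition Iint (W : R -> R) (b : R) : R :=
  epsilon (inhabits 0) (fun w => RInt_eq (fun s => s * W s) 0 b w).

Definition Wgood (W : R -> R) : Prop :=
  (forall s, 0 <= s -> 0 < W s) /\ (forall s t, 0 <= s -> s <= t -> W t <= W s).

Lemma Iint_spec W v b : ImpInt0 (fun s => s * W s) v -> 0 <= b -> RInt_eq (fun s => s * W s) 0 b (Iint W b).
Proof. intros [H1 _] Hb. unfold Iint. apply epsilon_spec. apply H1; auto. Qed.

Lemma Iint_diff W v a b : ImpInt0 (fun s => s * W s) v -> Wgood W -> 0 <= a -> a <= b ->
  a * W b * (b - a) <= Iint W b - Iint W a.
Proof.
  intros HI [Wp Wd] Ha Hab.
  destruct (Iint_spec W v b HI ltac:(lra)) as [prb Hb].
  destruct (Iint_spec W v a HI ltac:(lra)) as [pra Ha'].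
  set (prab := RiemannInt_P23 prb (conj Ha Hab)).
  pose proof (RiemannInt_P26 pra prab prb) as H26.
  assert (a * W b * (b - a) <= RiemannInt prab).
  { refine (proj1 (RiemannInt_const_bound (l := a * W b) (u := b * W a) prab Hab _)).
    intros x Hx. assert (W x <= W a) by (apply Wd; lra). assert (W b <= W x) by (apply Wd; lra).
    pose proof (Wp b ltac:(lra)). pose proof (Wp x ltac:(lra)). split; nra. }
  lra.
Qed.

Lemma Iint_nonneg W v b : ImpInt0 (fun s => s * W s) v -> Wgood W -> 0 <= b -> 0 <= Iint W b.
Proof.
  intros HI [Wp Wd] Hb.
  destruct (Iint_spec W v b HI Hb) as [prb <-].
  assert (0 * (b - 0) <= RiemannInt prb); [|lra].
  refine (proj1 (RiemannInt_const_bound (l := 0) (u := b * W 0) prb Hb _)). intros x Hx. assert (W x <= W 0) by (apply Wd; lra). pose proof (Wp x ltac:(lra)). split; nra.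
Qed.

Lemma Iint_bound W v b : ImpInt0 (fun s => s * W s) v -> Wgood W -> 0 <= b -> Iint W b <= Rabs v + 1.
Proof.
  intros HI HW Hb. pose proof HI as [_ H2].
  destruct (H2 1 Rlt_0_1) as [M HM].
  set (b' := Rmax b (Rmax M 0)).
  assert (Hb1 : b <= b') by apply Rmax_l.
  assert (Hb2 : M <= b') by (eapply Rle_trans; [apply Rmax_l| apply Rmax_r]).
  pose proof (Iint_diff W v b b' HI HW Hb Hb1).
  pose proof (HW) as [Wp _]. pose proof (Wp b' ltac:(lra)).
  assert (0 <= b * W b' * (b' - b)) by (apply Rmult_le_pos; [apply Rmult_le_pos|]; lra).
  specialize (HM b' (Iint W b') Hb2 (Iint_spec W v b' HI ltac:(lra))).
  apply Rabs_def2 in HM. pose proof (Rle_abs v). lra.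
Qed.

Lemma W_decay W v s : ImpInt0 (fun s => s * W s) v -> Wgood W -> 0 < s -> W s <= 4 * (Rabs v + 1) / (s * s).
Proof.
  intros HI HW Hs.
  pose proof (Iint_diff W v (s / 2) s HI HW ltac:(lra) ltac:(lra)).
  pose proof (Iint_bound W v s HI HW ltac:(lra)).
  pose proof (Iint_nonneg W v (s / 2) HI HW ltac:(lra)).
  apply Rmult_le_reg_r with (s * s). nra.
  replace (4 * (Rabs v + 1) / (s * s) * (s * s)) with (4 * (Rabs v + 1)) by (field; lra).
  nra.
Qed.

Definition U (W : R -> R) (s : R) := W (Rmax 0 (s - 1)).

Lemma U_pos W s : Wgood W -> 0 < U W s.
Proof. intros [Wp _]. unfold U. apply Wp, Rmax_l. Qed.

Lemma U_dec W s t : Wgood W -> s <= t -> U W t <= U W s.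
Proof.
  intros [_ Wd] H. unfold U. apply Wd. apply Rmax_l.
  apply Rle_max_compat_l. lra.
Qed.

Lemma U_ge_W W s : Wgood W -> 0 <= s -> W s <= U W s.
Proof. intros [_ Wd] Hs. unfold U. apply Wd. apply Rmax_l. apply Rmax_lub; lra. Qed.

Lemma U_phi W v s : ImpInt0 (fun s => s * W s) v -> Wgood W -> 0 <= s ->
  U W s <= (5 * Rabs (W 0) + 20 * (Rabs v + 1)) / (1 + s ^ 2).
Proof.
  intros HI HW Hs. pose proof HW as [Wp Wd].
  assert (HA : W 0 <= Rabs (W 0)) by apply Rle_abs.
  pose proof (Rabs_pos v).
  apply Rmult_le_reg_r with (1 + s ^ 2). nra.
  replace ((5 * Rabs (W 0) + 20 * (Rabs v + 1)) / (1 + s ^ 2) * (1 + s ^ 2))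
    with (5 * Rabs (W 0) + 20 * (Rabs v + 1)) by (field; nra).
  destruct (Rlt_or_le s 2) as [H2|H2].
  - assert (U W s <= W 0) by (unfold U; apply Wd; [lra| apply Rmax_l]).
    pose proof (U_pos W s HW). assert (s ^ 2 <= 4) by nra. assert (U W s * (1 + s^2) <= U W s * 5) by (apply Rmult_le_compat_l; lra). lra.
  - assert (HU : U W s <= W (s / 2)).
    { unfold U. rewrite Rmax_right by lra. apply Wd; lra. }
    pose proof (W_decay W v (s / 2) HI HW ltac:(lra)).
    assert (U W s * (s * s) <= 16 * (Rabs v + 1)).
    { assert (Hss : 0 < s * s) by nra.
      apply Rle_trans with (4 * (Rabs v + 1) / (s / 2 * (s / 2)) * (s * s)).
      apply Rmult_le_compat_r; lra.
      right. field. lra. }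
    pose proof (U_pos W s HW). assert (U W s * 4 <= U W s * (s*s)) by (apply Rmult_le_compat_l; nra). pose proof (Rabs_pos (W 0)). replace (s ^ 2) with (s * s) by ring. lra.
Qed.

Lemma U_jsum W v rho J : ImpInt0 (fun s => s * W s) v -> Wgood W -> 0 < rho -> NoDup J ->
  lsum (fun j => powerRZ 2 j * powerRZ 2 j * U W (powerRZ 2 j * rho)) J
    <= (6 * Rabs (W 0) + 16 * (Rabs v + 1)) / (rho * rho).
Proof.
  intros HI HW Hr HJ. pose proof HW as [Wp Wd].
  set (A := Rabs (W 0)). assert (HA : W 0 <= A) by apply Rle_abs.
  set (T1 := fun j : Z => 4 / 3 * Rmin ((powerRZ 2 j * rho) ^ 2) 4).
  set (T2 := fun j : Z => Iint W (powerRZ 2 j * rho / 2)).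
  assert (Hrr : 0 < rho * rho) by nra.
  apply Rle_trans with ((16 / 3 * A + 16 * (Rabs v + 1)) / (rho * rho) - 0).
  2: { rewrite Rminus_0_r. unfold A. pose proof (Rabs_pos (W 0)). unfold Rdiv.
       apply Rmult_le_compat_r. apply Rlt_le, Rinv_0_lt_compat; auto. lra. }
  apply (telescope_Z _ (fun j => (A * T1 j + 16 * T2 j) / (rho * rho))).
  - intros j. pose proof (pow2Z_pos j). pose proof (U_pos W (powerRZ 2 j * rho) HW).
    apply Rmult_le_pos; [nra| lra].
  - intros j. rewrite (pow2Z_P j). set (p := powerRZ 2 (j - 1)).
    assert (Hp : 0 < p) by apply pow2Z_pos.
    unfold T1, T2. fold p. rewrite (pow2Z_P j). fold p.
    set (s := 2 * p * rho). assert (Hs : 0 < s) by (unfold s; nra).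
    replace (2 * p * rho / 2) with (s / 2) by (unfold s; field).
    replace (p * rho / 2) with (s / 4) by (unfold s; field).
    replace (p * rho) with (s / 2) by (unfold s; field).
    replace (2 * p * (2 * p)) with (s * s / (rho * rho)) by (unfold s; field; lra).
    pose proof (Iint_diff W v (s / 4) (s / 2) HI HW ltac:(lra) ltac:(lra)) as HD.
    assert (HUb : U W s <= A * (if Rlt_dec s 2 then 1 else 0) + W (s / 2)).
    { destruct (Rlt_dec s 2).
      - assert (U W s <= W 0) by (unfold U; apply Wd; [lra| apply Rmax_l]).
        pose proof (Wp (s / 2) ltac:(lra)). lra.
      - unfold U. rewrite Rmax_right by lra. rewrite Rmult_0_r, Rplus_0_l. apply Wd; lra. }
    assert (HT1 : s ^ 2 * (if Rlt_dec s 2 then 1 else 0) <= 4 / 3 * Rmin (s ^ 2) 4 - 4 / 3 * Rmin ((s / 2) ^ 2) 4).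
    { destruct (Rlt_dec s 2).
      - rewrite Rmin_left by nra. rewrite Rmin_left by nra. nra.
      - assert (Rmin ((s / 2) ^ 2) 4 <= Rmin (s ^ 2) 4).
        { apply Rmin_glb. eapply Rle_trans; [apply Rmin_l|]. nra. apply Rmin_r. }
        nra. }
    assert (HW2 : s * s * W (s / 2) <= 16 * (Iint W (s / 2) - Iint W (s / 4))) by nra.
    unfold Rdiv. rewrite <- Rmult_minus_distr_r.
    replace (s * s * / (rho * rho) * U W s) with ((s * s * U W s) * / (rho * rho)) by ring.
    apply Rmult_le_compat_r. apply Rlt_le, Rinv_0_lt_compat; auto.
    assert (HA0 : 0 <= A) by apply Rabs_pos.
    assert (s * s * U W s <= A * (s ^ 2 * (if Rlt_dec s 2 then 1 else 0)) + s * s * W (s / 2)).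
    { assert (0 <= s * s) by nra.
      apply Rle_trans with (s * s * (A * (if Rlt_dec s 2 then 1 else 0) + W (s / 2))).
      apply Rmult_le_compat_l; auto. right. ring. }
    assert (A * (s ^ 2 * (if Rlt_dec s 2 then 1 else 0)) <= A * (4 / 3 * Rmin (s ^ 2) 4 - 4 / 3 * Rmin ((s / 2) ^ 2) 4))
      by (apply Rmult_le_compat_l; auto).
    lra.
  - intros j. pose proof (pow2Z_pos j). unfold T1, T2.
    assert (H0 : 0 <= Rmin ((powerRZ 2 j * rho) ^ 2) 4) by (apply Rmin_glb; nra).
    assert (H4 : Rmin ((powerRZ 2 j * rho) ^ 2) 4 <= 4) by apply Rmin_r.
    pose proof (Iint_nonneg W v (powerRZ 2 j * rho / 2) HI HW ltac:(nra)).
    pose proof (Iint_bound W v (powerRZ 2 j * rho / 2) HI HW ltac:(nra)).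
    assert (HA0 : 0 <= A) by apply Rabs_pos.
    split.
    + apply Rmult_le_pos. nra. apply Rlt_le, Rinv_0_lt_compat; auto.
    + unfold Rdiv. apply Rmult_le_compat_r. apply Rlt_le, Rinv_0_lt_compat; auto. nra.
  - auto.
Qed.

Lemma Cre_sub0 z w : Cre (Csub z w) = Cre z - Cre w.
Proof. reflexivity. Qed.
Lemma Cim_sub0 z w : Cim (Csub z w) = Cim z - Cim w.
Proof. reflexivity. Qed.

Lemma Cnorm_rev z w : Cnorm z - Cnorm w <= Cnorm (Csub z w).
Proof.
  assert (z = Cadd w (Csub z w)) by (destruct z, w; unfold Cadd, Csub, Cre, Cim; cbn [fst snd]; f_equal; ring).
  pose proof (Cnorm_add_le w (Csub z w)). rewrite <- H in H0. lra.
Qed.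

Lemma maj_good W g : radial_decr_L1_majorant W g -> Wgood W.
Proof. intros [H1 [H2 _]]. split; auto. Qed.

Lemma psi_bound W psi dpsi :
  (forall x, derivable_pt_lim (fun t => Cre (psi t)) x (Cre (dpsi x))) ->
  (forall x, derivable_pt_lim (fun t => Cim (psi t)) x (Cim (dpsi x))) ->
  radial_decr_L1_majorant W psi -> forall t, Cnorm (psi t) <= W (Rabs t).
Proof.
  intros Hre Him [Wp [Wd [_ [N [HN HNb]]]]] t.
  apply Rnot_lt_le; intros Hc.
  set (e := Cnorm (psi t) - W (Rabs t)).
  destruct (deriv_cont _ t _ (Hre t) (e / 2)) as [d1 [Hd1 Hc1]]; [unfold e; lra|].
  destruct (deriv_cont _ t _ (Him t) (e / 2)) as [d2 [Hd2 Hc2]]; [unfold e; lra|].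
  set (d := Rmin d1 d2). assert (Hd : 0 < d) by (apply Rmin_pos; auto).
  assert (Hnear : forall s, Rabs (s - t) < d -> W (Rabs t) < Cnorm (psi s)).
  { intros s Hs. assert (Rabs (s - t) < d1) by (eapply Rlt_le_trans; [apply Hs| apply Rmin_l]).
    assert (Rabs (s - t) < d2) by (eapply Rlt_le_trans; [apply Hs| apply Rmin_r]).
    specialize (Hc1 s H). specialize (Hc2 s H0).
    pose proof (Cnorm_rev (psi t) (psi s)). pose proof (Cnorm_le_sum (Csub (psi t) (psi s))).
    rewrite Cre_sub0, Cim_sub0 in H2.
    rewrite Rabs_minus_sym in Hc1, Hc2. unfold e in *. lra. }
  destruct (Rle_or_lt 0 t) as [Ht|Ht].
  - destruct (null_interval N t (t + d) HN ltac:(lra)) as [s [Hs HNs]].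
    specialize (HNb s HNs). specialize (Hnear s ltac:(apply Rabs_def1; lra)).
    assert (W (Rabs s) <= W (Rabs t)).
    { rewrite (Rabs_right s), (Rabs_right t) by lra. apply Wd; lra. }
    lra.
  - destruct (null_interval N (t - d) t HN ltac:(lra)) as [s [Hs HNs]].
    specialize (HNb s HNs). specialize (Hnear s ltac:(apply Rabs_def1; lra)).
    assert (W (Rabs s) <= W (Rabs t)).
    { rewrite (Rabs_left s), (Rabs_left t) by lra. apply Wd; lra. }
    lra.
Qed.

Lemma seg_lip g g' N u v M :
  (forall t, derivable_pt_lim g t (g' t)) -> Null N ->
  (forall t, Rmin u v <= t <= Rmax u v -> ~ N t -> Rabs (g' t) <= M) ->
  Rabs (g v - g u) <= M * Rabs (v - u).
Proof.
  intros Hd HN HM. destruct (Rle_or_lt u v) as [H|H].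
  - rewrite Rmin_left, Rmax_right in HM by lra. rewrite (Rabs_right (v - u)) by lra.
    apply (deriv_bound_lip g g' N u v M); auto.
  - rewrite Rmin_right, Rmax_left in HM by lra. rewrite Rabs_minus_sym, (Rabs_left (v - u)) by lra.
    replace (- (v - u)) with (u - v) by ring.
    apply (deriv_bound_lip g g' N v u M); auto. lra.
Qed.

Lemma psi_lip W psi dpsi :
  (forall x, derivable_pt_lim (fun t => Cre (psi t)) x (Cre (dpsi x))) ->
  (forall x, derivable_pt_lim (fun t => Cim (psi t)) x (Cim (dpsi x))) ->
  radial_decr_L1_majorant W dpsi -> forall u v, Rabs (v - u) <= 1 ->
  Cnorm (Csub (psi v) (psi u)) <= 2 * U W (Rabs u) * Rabs (v - u).
Proof.
  intros Hre Him [Wp [Wd [_ [N [HN HNb]]]]] u v Huv.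
  assert (HM : forall t, Rmin u v <= t <= Rmax u v -> ~ N t -> Cnorm (dpsi t) <= U W (Rabs u)).
  { intros t Ht HNt. eapply Rle_trans. apply HNb; auto. unfold U. apply Wd. apply Rmax_l.
    apply Rmax_lub. apply Rabs_pos.
    assert (Rabs (t - u) <= 1).
    { apply Rabs_le. destruct (Rle_or_lt u v).
      - rewrite Rmin_left, Rmax_right in Ht by lra. rewrite Rabs_right in Huv by lra. lra.
      - rewrite Rmin_right, Rmax_left in Ht by lra. rewrite Rabs_left in Huv by lra. lra. }
    pose proof (Rabs_triang_inv u (u - t)). replace (u - (u - t)) with t in H0 by ring.
    rewrite Rabs_minus_sym in H. lra. }
  pose proof (seg_lip _ _ N u v (U W (Rabs u)) Hre HN
                (fun t Ht HNt => Rle_trans _ _ _ (Cre_le (dpsi t)) (HM t Ht HNt))).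
  pose proof (seg_lip _ _ N u v (U W (Rabs u)) Him HN
                (fun t Ht HNt => Rle_trans _ _ _ (Cim_le (dpsi t)) (HM t Ht HNt))).
  eapply Rle_trans. apply Cnorm_le_sum.
  rewrite Cre_sub0, Cim_sub0. lra.
Qed.

Definition Dc (W : R -> R) (v : R) := 5 * Rabs (W 0) + 20 * (Rabs v + 1).

Lemma Dc_pos W v : 0 < Dc W v.
Proof. unfold Dc. pose proof (Rabs_pos (W 0)); pose proof (Rabs_pos v); lra. Qed.

Lemma KA W v a K : ImpInt0 (fun s => s * W s) v -> Wgood W -> NoDup K ->
  lsum (fun k => U W (Rabs (a - IZR k))) K <= 8 * Dc W v.
Proof.
  intros HI HW HK.
  apply Rle_trans with (lsum (fun k => Dc W v * / (1 + (a - IZR k) ^ 2)) K).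
  - apply lsum_le. intros k _. eapply Rle_trans. apply (U_phi W v); auto. apply Rabs_pos.
    rewrite pow2_abs. fold (Dc W v). right. unfold Rdiv. auto.
  - rewrite lsum_scal. pose proof (ksum_phi a K HK). pose proof (Dc_pos W v). nra.
Qed.

Lemma UU_pt W a b k : Wgood W ->
  U W (Rabs (a - k)) * U W (Rabs (b - k)) <=
  U W (Rabs (a - b) / 2) * (U W (Rabs (a - k)) + U W (Rabs (b - k))).
Proof.
  intros HW.
  pose proof (U_pos W (Rabs (a - k)) HW). pose proof (U_pos W (Rabs (b - k)) HW).
  pose proof (U_pos W (Rabs (a - b) / 2) HW).
  assert (Rabs (a - b) <= Rabs (a - k) + Rabs (b - k)).
  { pose proof (Rabs_triang (a - k) (- (b - k))) as Ht. rewrite Rabs_Ropp in Ht.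
    replace ((a - k) + - (b - k)) with (a - b) in Ht by ring. lra. }
  destruct (Rle_or_lt (Rabs (a - b) / 2) (Rabs (a - k))) as [Hp|Hp].
  - pose proof (U_dec W _ _ HW Hp). nra.
  - assert (Hq : Rabs (a - b) / 2 <= Rabs (b - k)) by lra.
    pose proof (U_dec W _ _ HW Hq). nra.
Qed.

Lemma KB W v a b K : ImpInt0 (fun s => s * W s) v -> Wgood W -> NoDup K ->
  lsum (fun k => U W (Rabs (a - IZR k)) * U W (Rabs (b - IZR k))) K <= 16 * Dc W v * U W (Rabs (a - b) / 2).
Proof.
  intros HI HW HK.
  eapply Rle_trans. apply lsum_le. intros k _. apply (UU_pt W a b (IZR k) HW).
  rewrite lsum_scal, lsum_plus.
  pose proof (KA W v a K HI HW HK). pose proof (KA W v b K HI HW HK).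
  pose proof (U_pos W (Rabs (a - b) / 2) HW). nra.
Qed.

Lemma Cnorm_sub_le z w : Cnorm (Csub z w) <= Cnorm z + Cnorm w.
Proof.
  assert (Csub z w = Cadd z (Cscale (-1) w)) by (destruct z, w; unfold Cadd, Csub, Cscale, Cre, Cim; cbn [fst snd]; f_equal; ring).
  rewrite H. eapply Rle_trans. apply Cnorm_add_le. rewrite Cnorm_scale. replace (Rabs (-1)) with 1 by (rewrite Rabs_left; lra). lra.
Qed.

Lemma KC W v (psi : R -> Cx) a b c K : ImpInt0 (fun s => s * W s) v -> Wgood W -> NoDup K ->
  (forall t, Cnorm (psi t) <= U W (Rabs t)) ->
  (forall u w, Rabs (w - u) <= 1 -> Cnorm (Csub (psi w) (psi u)) <= 2 * U W (Rabs u) * Rabs (w - u)) ->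
  Rabs (a - b) / 2 <= Rabs (c - b) ->
  lsum (fun k => Cnorm (Csub (psi (c - IZR k)) (psi (a - IZR k))) * U W (Rabs (b - IZR k))) K
    <= 32 * Dc W v * Rabs (c - a) * U W (Rabs (a - b) / 4).
Proof.
  intros HI HW HK Hp1 Hp2 Hcb.
  pose proof (Dc_pos W v) as HD.
  set (H := Rabs (c - a)). set (R0 := Rabs (a - b)).
  assert (HR0 : 0 <= R0) by apply Rabs_pos.
  assert (HU42 : U W (R0 / 2) <= U W (R0 / 4)) by (apply U_dec; auto; lra).
  assert (HU4 : 0 < U W (R0 / 4)) by (apply U_pos; auto).
  destruct (Rle_or_lt H 1) as [H1|H1].
  - apply Rle_trans with (lsum (fun k => (2 * H) * (U W (Rabs (a - IZR k)) * U W (Rabs (b - IZR k)))) K).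
    + apply lsum_le. intros k _.
      assert (Hk : Rabs ((c - IZR k) - (a - IZR k)) = H) by (unfold H; f_equal; ring).
      pose proof (Hp2 (a - IZR k) (c - IZR k) ltac:(lra)) as Hq. rewrite Hk in Hq.
      pose proof (U_pos W (Rabs (b - IZR k)) HW).
      apply Rle_trans with (2 * U W (Rabs (a - IZR k)) * H * U W (Rabs (b - IZR k))).
      apply Rmult_le_compat_r; lra. right; ring.
    + rewrite lsum_scal. pose proof (KB W v a b K HI HW HK). fold R0 in H0.
      assert (0 <= H) by apply Rabs_pos.
      apply Rle_trans with (2 * H * (16 * Dc W v * U W (R0 / 2))).
      apply Rmult_le_compat_l; lra.
      assert (0 <= H * Dc W v) by nra.
      apply Rle_trans with (32 * (H * Dc W v) * U W (R0 / 2)). right; ring.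
      apply Rle_trans with (32 * (H * Dc W v) * U W (R0 / 4)). apply Rmult_le_compat_l; lra.
      right; ring.
  - apply Rle_trans with (lsum (fun k => U W (Rabs (c - IZR k)) * U W (Rabs (b - IZR k)) + U W (Rabs (a - IZR k)) * U W (Rabs (b - IZR k))) K).
    + apply lsum_le. intros k _.
      pose proof (Cnorm_sub_le (psi (c - IZR k)) (psi (a - IZR k))).
      pose proof (Hp1 (c - IZR k)). pose proof (Hp1 (a - IZR k)).
      pose proof (U_pos W (Rabs (b - IZR k)) HW).
      rewrite <- Rmult_plus_distr_r. apply Rmult_le_compat_r; lra.
    + rewrite lsum_plus.
      pose proof (KB W v c b K HI HW HK). pose proof (KB W v a b K HI HW HK). fold R0 in H2.
      assert (U W (Rabs (c - b) / 2) <= U W (R0 / 4)) by (apply U_dec; [exact HW| fold R0 in Hcb; lra]).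
      assert (16 * Dc W v * U W (Rabs (c - b) / 2) <= 16 * Dc W v * U W (R0 / 4)) by (apply Rmult_le_compat_l; lra).
      assert (16 * Dc W v * U W (R0 / 2) <= 16 * Dc W v * U W (R0 / 4)) by (apply Rmult_le_compat_l; lra).
      assert (32 * Dc W v * U W (R0 / 4) <= 32 * Dc W v * H * U W (R0 / 4)).
      { assert (0 <= Dc W v * U W (R0 / 4)) by nra. nra. }
      lra.
Qed.

Lemma sqrt_pow2 j : sqrt (powerRZ 2 j) * sqrt (powerRZ 2 j) = powerRZ 2 j.
Proof. apply sqrt_sqrt. apply Rlt_le, pow2Z_pos. Qed.

Lemma eps_abs (eps : Z -> Z -> R) j k : sign_seq eps -> Rabs (eps j k) = 1.
Proof. intros H. destruct (H j k) as [-> | ->]. apply Rabs_R1. rewrite Rabs_left; lra. Qed.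

Lemma kt_norm psi eps x y j k : sign_seq eps ->
  Cnorm (kernel_term psi eps x y (j, k)) =
  powerRZ 2 j * (Cnorm (psi (powerRZ 2 j * x - IZR k)) * Cnorm (psi (powerRZ 2 j * y - IZR k))).
Proof.
  intros He. unfold kernel_term, psi_jk. cbn [fst snd].
  set (s := sqrt (powerRZ 2 j)).
  set (A := psi (powerRZ 2 j * x - IZR k)). set (B := psi (powerRZ 2 j * y - IZR k)).
  rewrite Cnorm_scale, Cnorm_mul, Cnorm_conj, !Cnorm_scale, eps_abs by auto.
  unfold s. rewrite Rabs_right by (apply Rle_ge, sqrt_pos). fold s.
  assert (Hs : s * s = powerRZ 2 j) by apply sqrt_pow2. rewrite <- Hs. ring.
Qed.

Lemma kt_diff1 psi eps x y z j k : sign_seq eps ->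
  Cnorm (Csub (kernel_term psi eps z y (j, k)) (kernel_term psi eps x y (j, k))) =
  powerRZ 2 j * (Cnorm (Csub (psi (powerRZ 2 j * z - IZR k)) (psi (powerRZ 2 j * x - IZR k)))
                 * Cnorm (psi (powerRZ 2 j * y - IZR k))).
Proof.
  intros He. unfold kernel_term, psi_jk. cbn [fst snd].
  set (s := sqrt (powerRZ 2 j)). set (e := eps j k).
  set (A := psi (powerRZ 2 j * z - IZR k)). set (A' := psi (powerRZ 2 j * x - IZR k)).
  set (B := psi (powerRZ 2 j * y - IZR k)).
  replace (Csub (Cscale e (Cmul (Cscale s A) (Cconj (Cscale s B)))) (Cscale e (Cmul (Cscale s A') (Cconj (Cscale s B)))))
    with (Cscale e (Cmul (Cscale s (Csub A A')) (Cconj (Cscale s B)))).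
  2: { destruct A, A', B. unfold Cscale, Cmul, Cconj, Csub, Cre, Cim; cbn [fst snd]. f_equal; ring. }
  rewrite Cnorm_scale, Cnorm_mul, Cnorm_conj, !Cnorm_scale. unfold e. rewrite eps_abs by auto.
  unfold s. rewrite Rabs_right by (apply Rle_ge, sqrt_pos). fold s.
  assert (Hs : s * s = powerRZ 2 j) by apply sqrt_pow2. rewrite <- Hs. ring.
Qed.

Lemma kt_diff2 psi eps x y w j k : sign_seq eps ->
  Cnorm (Csub (kernel_term psi eps x w (j, k)) (kernel_term psi eps x y (j, k))) =
  powerRZ 2 j * (Cnorm (Csub (psi (powerRZ 2 j * w - IZR k)) (psi (powerRZ 2 j * y - IZR k)))
                 * Cnorm (psi (powerRZ 2 j * x - IZR k))).
Proof.
  intros He. unfold kernel_term, psi_jk. cbn [fst snd].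
  set (s := sqrt (powerRZ 2 j)). set (e := eps j k).
  set (A := psi (powerRZ 2 j * x - IZR k)). set (B := psi (powerRZ 2 j * w - IZR k)).
  set (B' := psi (powerRZ 2 j * y - IZR k)).
  replace (Csub (Cscale e (Cmul (Cscale s A) (Cconj (Cscale s B)))) (Cscale e (Cmul (Cscale s A) (Cconj (Cscale s B')))))
    with (Cscale e (Cmul (Cscale s A) (Cconj (Cscale s (Csub B B'))))).
  2: { destruct A, B, B'. unfold Cscale, Cmul, Cconj, Csub, Cre, Cim; cbn [fst snd]. f_equal; ring. }
  rewrite Cnorm_scale, Cnorm_mul, Cnorm_conj, !Cnorm_scale. unfold e. rewrite eps_abs by auto.
  unfold s. rewrite Rabs_right by (apply Rle_ge, sqrt_pos). fold s.
  assert (Hs : s * s = powerRZ 2 j) by apply sqrt_pow2. rewrite <- Hs. ring.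
Qed.

Lemma box_sum (f : Z * Z -> R) F : (forall p, 0 <= f p) -> NoDup F ->
  lsum f F <= lsum (fun j => lsum (fun k => f (j, k)) (nodup Z.eq_dec (map snd F))) (nodup Z.eq_dec (map fst F)).
Proof.
  intros Hf HF. rewrite <- lsum_prod. apply sub_sum; auto.
  intros [j k] Hp. apply in_prod_iff. split; apply nodup_In.
  - apply in_map_iff. exists (j, k); auto.
  - apply in_map_iff. exists (j, k); auto.
Qed.

Lemma abs_scale p x y : 0 < p -> Rabs (p * x - p * y) = p * Rabs (x - y).
Proof.
  intros Hp. replace (p * x - p * y) with (p * (x - y)) by ring. rewrite Rabs_mult, Rabs_right; lra.
Qed.

Lemma E1 W v psi eps x y F : ImpInt0 (fun s => s * W s) v -> Wgood W -> sign_seq eps ->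
  (forall t, Cnorm (psi t) <= U W (Rabs t)) -> x <> y -> NoDup F ->
  lsum (fun i => Cnorm (kernel_term psi eps x y i)) F <= 128 * (Dc W v * Dc W v) / Rabs (x - y).
Proof.
  intros HI HW He Hp1 Hxy HF.
  set (r := Rabs (x - y)) in *. assert (Hr : 0 < r) by (apply Rabs_pos_lt; lra).
  set (D := Dc W v). assert (HD : 0 < D) by apply Dc_pos.
  eapply Rle_trans. apply box_sum; auto. intros; apply Cnorm_nonneg.
  set (J := nodup Z.eq_dec (map fst F)). set (K := nodup Z.eq_dec (map snd F)).
  apply Rle_trans with (lsum (fun j => (16 * D * D) * (powerRZ 2 j * / (1 + (powerRZ 2 j * (r / 2)) ^ 2))) J).
  - apply lsum_le. intros j _.
    set (p := powerRZ 2 j). assert (Hp : 0 < p) by apply pow2Z_pos.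
    rewrite (lsum_ext _ (fun k => p * (Cnorm (psi (p * x - IZR k)) * Cnorm (psi (p * y - IZR k)))))
      by (intros k; apply kt_norm; auto).
    rewrite lsum_scal.
    assert (H1 : lsum (fun k => Cnorm (psi (p * x - IZR k)) * Cnorm (psi (p * y - IZR k))) K
                 <= 16 * D * U W (Rabs (p * x - p * y) / 2)).
    { eapply Rle_trans; [| apply (KB W v (p * x) (p * y) K HI HW (NoDup_nodup _ _))].
      apply lsum_le. intros k _. apply Rmult_le_compat; try apply Cnorm_nonneg; apply Hp1. }
    rewrite abs_scale in H1 by auto. fold r in H1.
    assert (H2 : U W (p * r / 2) <= D / (1 + (p * (r / 2)) ^ 2)).
    { replace (p * (r / 2)) with (p * r / 2) by field. apply U_phi; auto. nra. }
    assert (H3 : p * lsum (fun k => Cnorm (psi (p * x - IZR k)) * Cnorm (psi (p * y - IZR k))) K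
                 <= p * (16 * D * (D / (1 + (p * (r / 2)) ^ 2)))).
    { apply Rmult_le_compat_l; [lra|]. eapply Rle_trans; [apply H1|]. apply Rmult_le_compat_l; lra. }
    eapply Rle_trans; [apply H3|]. right. unfold Rdiv. ring.
  - rewrite lsum_scal. pose proof (jsum_phi (r / 2) J ltac:(lra) (NoDup_nodup _ _)).
    assert (0 < 16 * D * D) by nra.
    apply Rle_trans with (16 * D * D * (4 / (r / 2))). apply Rmult_le_compat_l; lra.
    right. field. lra.
Qed.

Lemma E2 W v psi eps x y z F : ImpInt0 (fun s => s * W s) v -> Wgood W -> sign_seq eps ->
  (forall t, Cnorm (psi t) <= U W (Rabs t)) ->
  (forall u w, Rabs (w - u) <= 1 -> Cnorm (Csub (psi w) (psi u)) <= 2 * U W (Rabs u) * Rabs (w - u)) ->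
  x <> y -> Rabs (z - x) <= Rabs (x - y) / 2 -> NoDup F ->
  lsum (fun i => Cnorm (Csub (kernel_term psi eps z y i) (kernel_term psi eps x y i))) F
    <= 512 * Dc W v * (6 * Rabs (W 0) + 16 * (Rabs v + 1)) * Rabs (z - x) / Rabs (x - y) ^ 2.
Proof.
  intros HI HW He Hp1 Hp2 Hxy Hzx HF.
  set (r := Rabs (x - y)) in *. assert (Hr : 0 < r) by (apply Rabs_pos_lt; lra).
  set (h := Rabs (z - x)) in *. assert (Hh : 0 <= h) by apply Rabs_pos.
  set (D := Dc W v). assert (HD : 0 < D) by apply Dc_pos.
  set (Cu := 6 * Rabs (W 0) + 16 * (Rabs v + 1)).
  assert (Hzy : r / 2 <= Rabs (z - y)).
  { pose proof (Rabs_triang (z - y) (x - z)). replace (z - y + (x - z)) with (x - y) in H by ring.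
    rewrite (Rabs_minus_sym x z) in H. fold r h in H. lra. }
  eapply Rle_trans. apply box_sum; auto. intros; apply Cnorm_nonneg.
  set (J := nodup Z.eq_dec (map fst F)). set (K := nodup Z.eq_dec (map snd F)).
  apply Rle_trans with (lsum (fun j => (32 * D * h) * (powerRZ 2 j * powerRZ 2 j * U W (powerRZ 2 j * (r / 4)))) J).
  - apply lsum_le. intros j _.
    set (p := powerRZ 2 j). assert (Hp : 0 < p) by apply pow2Z_pos.
    rewrite (lsum_ext _ (fun k => p * (Cnorm (Csub (psi (p * z - IZR k)) (psi (p * x - IZR k))) * Cnorm (psi (p * y - IZR k)))))
      by (intros k; apply kt_diff1; auto).
    rewrite lsum_scal.
    assert (H1 : lsum (fun k => Cnorm (Csub (psi (p * z - IZR k)) (psi (p * x - IZR k))) * Cnorm (psi (p * y - IZR k))) K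
                 <= 32 * D * Rabs (p * z - p * x) * U W (Rabs (p * x - p * y) / 4)).
    { eapply Rle_trans; [| apply (KC W v psi (p * x) (p * y) (p * z) K HI HW (NoDup_nodup _ _) Hp1 Hp2)].
      - apply lsum_le. intros k _. apply Rmult_le_compat_l. apply Cnorm_nonneg. apply Hp1.
      - rewrite !abs_scale by auto. fold r. nra. }
    rewrite !abs_scale in H1 by auto. fold r h in H1.
    assert (H3 : p * lsum (fun k => Cnorm (Csub (psi (p * z - IZR k)) (psi (p * x - IZR k))) * Cnorm (psi (p * y - IZR k))) K
                 <= p * (32 * D * (p * h) * U W (p * r / 4))) by (apply Rmult_le_compat_l; lra).
    eapply Rle_trans; [apply H3|]. right. replace (p * (r / 4)) with (p * r / 4) by field. ring.
  - rewrite lsum_scal. pose proof (U_jsum W v (r / 4) J HI HW ltac:(lra) (NoDup_nodup _ _)) as HU.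
    fold Cu in HU.
    assert (0 <= 32 * D * h) by nra.
    apply Rle_trans with (32 * D * h * (Cu / (r / 4 * (r / 4)))). apply Rmult_le_compat_l; auto.
    right. field. lra.
Qed.

Lemma E3 W v psi eps x y w F : ImpInt0 (fun s => s * W s) v -> Wgood W -> sign_seq eps ->
  (forall t, Cnorm (psi t) <= U W (Rabs t)) ->
  (forall u w, Rabs (w - u) <= 1 -> Cnorm (Csub (psi w) (psi u)) <= 2 * U W (Rabs u) * Rabs (w - u)) ->
  x <> y -> Rabs (w - y) <= Rabs (x - y) / 2 -> NoDup F ->
  lsum (fun i => Cnorm (Csub (kernel_term psi eps x w i) (kernel_term psi eps x y i))) F
    <= 512 * Dc W v * (6 * Rabs (W 0) + 16 * (Rabs v + 1)) * Rabs (w - y) / Rabs (x - y) ^ 2.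
Proof.
  intros HI HW He Hp1 Hp2 Hxy Hwy HF.
  set (r := Rabs (x - y)) in *. assert (Hr : 0 < r) by (apply Rabs_pos_lt; lra).
  set (h := Rabs (w - y)) in *. assert (Hh : 0 <= h) by apply Rabs_pos.
  set (D := Dc W v). assert (HD : 0 < D) by apply Dc_pos.
  set (Cu := 6 * Rabs (W 0) + 16 * (Rabs v + 1)).
  assert (Hwx : r / 2 <= Rabs (w - x)).
  { pose proof (Rabs_triang (w - x) (y - w)). replace (w - x + (y - w)) with (y - x) in H by ring.
    rewrite (Rabs_minus_sym y x), (Rabs_minus_sym y w) in H. fold r h in H. lra. }
  eapply Rle_trans. apply box_sum; auto. intros; apply Cnorm_nonneg.
  set (J := nodup Z.eq_dec (map fst F)). set (K := nodup Z.eq_dec (map snd F)).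
  apply Rle_trans with (lsum (fun j => (32 * D * h) * (powerRZ 2 j * powerRZ 2 j * U W (powerRZ 2 j * (r / 4)))) J).
  - apply lsum_le. intros j _.
    set (p := powerRZ 2 j). assert (Hp : 0 < p) by apply pow2Z_pos.
    rewrite (lsum_ext _ (fun k => p * (Cnorm (Csub (psi (p * w - IZR k)) (psi (p * y - IZR k))) * Cnorm (psi (p * x - IZR k)))))
      by (intros k; apply kt_diff2; auto).
    rewrite lsum_scal.
    assert (H1 : lsum (fun k => Cnorm (Csub (psi (p * w - IZR k)) (psi (p * y - IZR k))) * Cnorm (psi (p * x - IZR k))) K
                 <= 32 * D * Rabs (p * w - p * y) * U W (Rabs (p * y - p * x) / 4)).
    { eapply Rle_trans; [| apply (KC W v psi (p * y) (p * x) (p * w) K HI HW (NoDup_nodup _ _) Hp1 Hp2)].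
      - apply lsum_le. intros k _. apply Rmult_le_compat_l. apply Cnorm_nonneg. apply Hp1.
      - rewrite !abs_scale by auto. rewrite Rabs_minus_sym. fold r. nra. }
    rewrite !abs_scale in H1 by auto. rewrite (Rabs_minus_sym y x) in H1. fold r h in H1.
    assert (H3 : p * lsum (fun k => Cnorm (Csub (psi (p * w - IZR k)) (psi (p * y - IZR k))) * Cnorm (psi (p * x - IZR k))) K
                 <= p * (32 * D * (p * h) * U W (p * r / 4))) by (apply Rmult_le_compat_l; lra).
    eapply Rle_trans; [apply H3|]. right. replace (p * (r / 4)) with (p * r / 4) by field. ring.
  - rewrite lsum_scal. pose proof (U_jsum W v (r / 4) J HI HW ltac:(lra) (NoDup_nodup _ _)) as HU.
    fold Cu in HU.
    assert (0 <= 32 * D * h) by nra.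
    apply Rle_trans with (32 * D * h * (Cu / (r / 4 * (r / 4)))). apply Rmult_le_compat_l; auto.
    right. field. lra.
Qed.

Theorem theorem2p5 :
  forall W : R -> R,
    (exists v, ImpInt0 (fun s => s * W s) v) ->
    exists C1 C2 C3 : R, 0 < C1 /\ 0 < C2 /\ 0 < C3 /\
    forall (psi dpsi : R -> Cx),
      orthonormal_wavelet psi ->
      (forall x, derivable_pt_lim (fun t => Cre (psi t)) x (Cre (dpsi x))) ->
      (forall x, derivable_pt_lim (fun t => Cim (psi t)) x (Cim (dpsi x))) ->
      radial_decr_L1_majorant W psi ->
      radial_decr_L1_majorant W dpsi ->
      forall eps : Z -> Z -> R, sign_seq eps ->
        (forall x y, x <> y -> HasSumC (kernel_term psi eps x y) (Kern psi eps x y)) /\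
        (forall x y, x <> y -> Cnorm (Kern psi eps x y) <= C1 / Rabs (x - y)) /\
        (forall x y z, x <> y -> Rabs (z - x) <= Rabs (x - y) / 2 ->
           Cnorm (Csub (Kern psi eps z y) (Kern psi eps x y))
             <= C2 * Rabs (z - x) / Rabs (x - y) ^ 2) /\
        (forall x y w, x <> y -> Rabs (w - y) <= Rabs (x - y) / 2 ->
           Cnorm (Csub (Kern psi eps x w) (Kern psi eps x y))
             <= C3 * Rabs (w - y) / Rabs (x - y) ^ 2).
Proof.
  intros W [v HI].
  set (D := Dc W v). set (Cu := 6 * Rabs (W 0) + 16 * (Rabs v + 1)).
  assert (HD : 0 < D) by apply Dc_pos.
  assert (HCu : 0 < Cu) by (unfold Cu; pose proof (Rabs_pos (W 0)); pose proof (Rabs_pos v); lra).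
  exists (128 * (D * D)), (512 * D * Cu), (512 * D * Cu).
  split; [nra|]. split; [nra|]. split; [nra|].
  intros psi dpsi _ Hre Him Hmp Hmd eps Heps.
  assert (HW : Wgood W) by (apply (maj_good W psi); auto).
  assert (Hp1 : forall t, Cnorm (psi t) <= U W (Rabs t)).
  { intros t. eapply Rle_trans. apply (psi_bound W psi dpsi); auto. apply U_ge_W; auto. apply Rabs_pos. }
  pose proof (psi_lip W psi dpsi Hre Him Hmd) as Hp2.
  assert (Hsum : forall x y, x <> y -> HasSumC (kernel_term psi eps x y) (Kern psi eps x y)).
  { intros x y Hxy. unfold Kern. apply epsilon_spec.
    apply (HasSum_exists _ (128 * (Dc W v * Dc W v) / Rabs (x - y))).
    intros F HF. apply (E1 W v psi eps x y F); auto. }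
  split; [exact Hsum|]. split; [|split].
  - intros x y Hxy. apply (HasSum_bound (kernel_term psi eps x y)); auto.
    intros F HF. apply (E1 W v psi eps x y F); auto.
  - intros x y z Hxy Hzx.
    assert (Hzy : z <> y).
    { intros ->. assert (0 < Rabs (x - y)) by (apply Rabs_pos_lt; lra).
      rewrite Rabs_minus_sym in Hzx. lra. }
    apply (HasSum_diff (kernel_term psi eps z y) (kernel_term psi eps x y)); auto.
    intros F HF. apply (E2 W v psi eps x y z F); auto.
  - intros x y w Hxy Hwy.
    assert (Hxw : x <> w).
    { intros <-. assert (0 < Rabs (x - y)) by (apply Rabs_pos_lt; lra). lra. }
    apply (HasSum_diff (kernel_term psi eps x w) (kernel_term psi eps x y)); auto.
    intros F HF. apply (E3 W v psi eps x y w F); auto.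
Qed.
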